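(* Let $s\in\{+1,-1\}$ and $d\ge1$. Let $f:\mathbb T^d\to\mathbb R$ be continuous, even and nonzero, with $\widehat f\in\ell^1(\mathbb Z^d)$. Suppose there exist $r_f\in(0,1]$ and an integer $k\ge1$ such that $f(x)\ge0$ whenever $d_\infty(x,0)\ge r_f$, $\widehat f(0)\le0$, $s\widehat f(m)\ge0$ whenever $\max_j|m_j|\ge k$, and $sf(0)\le0$. Then $$r_f\,(2k-1)\ \ge\ 2^{-(1+4/d)}.$$
   Context: $\mathbb T^d=\mathbb R^d/\mathbb Z^d$ identified with $[-\tfrac12,\tfrac12]^d$, Haar probability measure $\lambda$; $\widehat f(m)=\int_{\mathbb T^d}f(x)e^{-2\pi i\langle x,m\rangle}d\lambda(x)$. $d_\infty(x,y)=\max_{1\le j\le d}|x_j-y_j|$, where $|t|$ denotes the distance from $t$ to $0$ in $\mathbb T^1=\mathbb R/\mathbb Z$. *)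

(* Defs.v *)
From Stdlib Require Import Reals Lra Lia ZArith ClassicalEpsilon.
Open Scope R_scope.

(* Points of R^d are modelled as x : nat -> R, only coordinates j < d matter. *)
Definition updR (x : nat -> R) (j : nat) (t : R) : nat -> R :=
  fun i => if Nat.eqb i j then t else x i.
Definition updZ (m : nat -> Z) (j : nat) (k : Z) : nat -> Z :=
  fun i => if Nat.eqb i j then k else m i.

(* One-dimensional Riemann integral of h over [a,b] (value of RiemannInt
   when h is Riemann integrable; unspecified otherwise). *)
Definition Rint (h : R -> R) (a b : R) : R :=
  epsilon (inhabits 0) (fun I => exists pr : Riemann_integrable h a b, RiemannInt pr = I).

Fixpoint integ (n : nat) (g : (nat -> R) -> R) (x : nat -> R) : R :=
  match n with
  | O => g x
  | S n' => Rint (fun t => integ n' g (updR x n' t)) (-(1/2)) (1/2)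
  end.

(* Integral over T^d = [-1/2,1/2]^d against Haar probability measure. *)
Definition torus_int (d : nat) (g : (nat -> R) -> R) : R := integ d g (fun _ => 0).

Fixpoint dot (d : nat) (x : nat -> R) (m : nat -> Z) : R :=
  match d with
  | O => 0
  | S d' => dot d' x m + x d' * IZR (m d')
  end.

(* Fourier coefficient  \hat f(m) = fhat_re + i * fhat_im *)
Definition fhat_re (d : nat) (f : (nat -> R) -> R) (m : nat -> Z) : R :=
  torus_int d (fun x => f x * cos (2 * PI * dot d x m)).
Definition fhat_im (d : nat) (f : (nat -> R) -> R) (m : nat -> Z) : R :=
  - torus_int d (fun x => f x * sin (2 * PI * dot d x m)).
Definition fhat_abs (d : nat) (f : (nat -> R) -> R) (m : nat -> Z) : R :=
  sqrt (fhat_re d f m ^ 2 + fhat_im d f m ^ 2).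

(* Sum of F over m in the box [-N,N]^n (coordinates 0..n-1), others from m. *)
Fixpoint boxsum (n N : nat) (F : (nat -> Z) -> R) (m : nat -> Z) : R :=
  match n with
  | O => F m
  | S n' => sum_f_R0 (fun i => boxsum n' N F (updZ m n' (Z.of_nat i - Z.of_nat N)%Z)) (2 * N)
  end.

(* \hat f \in l^1(Z^d) : partial sums of |\hat f| over boxes are bounded. *)
Definition fhat_l1 (d : nat) (f : (nat -> R) -> R) : Prop :=
  exists B : R, forall N : nat, boxsum d N (fhat_abs d f) (fun _ => 0%Z) <= B.

(* Functions on T^d: depend only on first d coordinates, 1-periodic in each. *)
Definition torus_fun (d : nat) (f : (nat -> R) -> R) : Prop :=
  (forall x y, (forall j, (j < d)%nat -> x j = y j) -> f x = f y) /\
  (forall x j, (j < d)%nat -> f (updR x j (x j + 1)) = f x).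

Definition torus_continuous (d : nat) (f : (nat -> R) -> R) : Prop :=
  forall x eps, 0 < eps -> exists delta, 0 < delta /\
    forall y, (forall j, (j < d)%nat -> Rabs (y j - x j) < delta) -> Rabs (f y - f x) < eps.

Definition even_fun (f : (nat -> R) -> R) : Prop :=
  forall x, f (fun j => - x j) = f x.

(* |t| = distance from t to 0 in R/Z *)
Definition tdist (t : R) : R := Rmin (frac_part t) (1 - frac_part t).

Definition dinf0_ge (d : nat) (x : nat -> R) (r : R) : Prop :=
  exists j, (j < d)%nat /\ tdist (x j) >= r.

Definition maxabs_ge (d : nat) (m : nat -> Z) (k : nat) : Prop :=
  exists j, (j < d)%nat /\ (Z.abs (m j) >= Z.of_nat k)%Z.

(* Main.v *)
Require Import Defs.
From Stdlib Require Import Reals ZArith Lra Lia Psatz ClassicalEpsilon Classical FunctionalExtensionality.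
From Coquelicot Require Import Coquelicot.
Open Scope R_scope.


Lemma Rint_RInt (h : R -> R) (a b : R) :
  a <= b -> (forall t, continuity_pt h t) -> Rint h a b = RInt h a b.
Proof.
  intros Hab Hc.
  assert (pr : Riemann_integrable h a b).
  { apply continuity_implies_RiemannInt; auto. }
  unfold Rint.
  destruct (epsilon_spec (inhabits 0)
    (fun I => exists pr : Riemann_integrable h a b, RiemannInt pr = I)
    (ex_intro _ (RiemannInt pr) (ex_intro _ pr eq_refl))) as [pr' H].
  rewrite <- H. symmetry. apply RInt_Reals.
Qed.

Lemma cont_exRInt (h : R -> R) a b : (forall t, continuity_pt h t) -> ex_RInt h a b.
Proof.
  intros Hc. apply (ex_RInt_continuous (V:=R_CompleteNormedModule)). intros z _.
  apply continuity_pt_filterlim. apply Hc.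
Qed.

Lemma cpt_eps (h : R -> R) t : continuity_pt h t ->
  forall eps, 0 < eps -> exists del, 0 < del /\ forall u, Rabs (u - t) < del -> Rabs (h u - h t) < eps.
Proof.
  intros Hc eps He.
  destruct (Hc eps He) as [del [Hd H]].
  exists del; split; auto. intros u Hu.
  destruct (Req_dec u t) as [->|Hne].
  - rewrite Rminus_diag, Rabs_R0; auto.
  - apply (H u). split. split. exact I. auto. simpl. unfold Rdist. auto.
Qed.

Lemma eps_cpt (h : R -> R) t :
  (forall eps, 0 < eps -> exists del, 0 < del /\ forall u, Rabs (u - t) < del -> Rabs (h u - h t) < eps)
  -> continuity_pt h t.
Proof.
  intros H eps He. destruct (H eps He) as [del [Hd H2]].
  exists del; split; auto. intros u [_ Hu]. simpl in *. unfold Rdist in *. auto.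
Qed.

Lemma compact_local (a b : R) (S : R -> R -> Prop) :
  a <= b ->
  (forall u v w, S u v -> S v w -> S u w) ->
  (forall t, a <= t <= b -> exists del, 0 < del /\ forall u v, t - del < u -> v < t + del -> S u v) ->
  S a b.
Proof.
  intros Hab Hglue Hloc.
  set (E := fun v => a <= v <= b /\ S a v).
  assert (Ea : E a).
  { split. lra. destruct (Hloc a (conj (Rle_refl a) Hab)) as [del [Hd H]]. apply H; lra. }
  assert (Hb : bound E). { exists b. intros v [Hv _]. lra. }
  destruct (completeness E Hb (ex_intro _ a Ea)) as [c [Hub Hlub]].
  assert (Hac : a <= c) by (apply Hub; auto).
  assert (Hcb : c <= b). { apply Hlub. intros v [Hv _]. lra. }
  destruct (Hloc c (conj Hac Hcb)) as [del [Hd Hl]].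
  destruct (classic (exists v0, E v0 /\ c - del < v0)) as [[v0 [[Hv0 Sv0] Hv0c]]|Hn].
  2:{ exfalso. assert (c <= c - del). { apply Hlub. intros v Ev.
        destruct (Rle_dec v (c - del)); auto. exfalso; apply Hn; exists v; split; auto; lra. }
      lra. }
  assert (Hv0le : v0 <= c) by (apply Hub; split; auto).
  set (w := Rmin b (c + del / 2)).
  assert (Sw : S a w).
  { apply Hglue with v0; auto. apply Hl; auto. unfold w. unfold Rmin. destruct (Rle_dec b (c + del/2)); lra. }
  assert (Ew : E w).
  { split; auto. unfold w; unfold Rmin; destruct (Rle_dec b (c + del/2)); lra. }
  assert (Hwc : w <= c) by (apply Hub; auto).
  unfold w in *. unfold Rmin in *. destruct (Rle_dec b (c + del/2)). auto. lra.
Qed.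

Definition TC := torus_continuous.

Lemma TC_op2 d (F : R -> R -> R) g1 g2 :
  (forall a b eps, 0 < eps -> exists del, 0 < del /\ forall a' b', Rabs (a' - a) < del -> Rabs (b' - b) < del -> Rabs (F a' b' - F a b) < eps) ->
  TC d g1 -> TC d g2 -> TC d (fun y => F (g1 y) (g2 y)).
Proof.
  intros HF H1 H2 x eps He.
  destruct (HF (g1 x) (g2 x) eps He) as [del [Hd HF']].
  destruct (H1 x del Hd) as [d1 [Hd1 H1']].
  destruct (H2 x del Hd) as [d2 [Hd2 H2']].
  exists (Rmin d1 d2). split. apply Rmin_pos; auto.
  intros y Hy. apply HF'.
  - apply H1'. intros j Hj. specialize (Hy j Hj). pose proof (Rmin_l d1 d2). lra.
  - apply H2'. intros j Hj. specialize (Hy j Hj). pose proof (Rmin_r d1 d2). lra.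
Qed.

Lemma cont_mult2 : forall a b eps, 0 < eps -> exists del, 0 < del /\ forall a' b', Rabs (a' - a) < del -> Rabs (b' - b) < del -> Rabs (a' * b' - a * b) < eps.
Proof.
  intros a b eps He.
  set (D := Rabs a + Rabs b + 2).
  assert (HD : 0 < D) by (unfold D; pose proof (Rabs_pos a); pose proof (Rabs_pos b); lra).
  exists (Rmin 1 (eps / D)). split. apply Rmin_pos. lra. apply Rdiv_lt_0_compat; auto.
  intros a' b' Ha Hb.
  pose proof (Rmin_l 1 (eps / D)). pose proof (Rmin_r 1 (eps / D)).
  set (del := Rmin 1 (eps / D)) in *.
  replace (a' * b' - a * b) with ((a' - a) * (b' - b) + (a' - a) * b + a * (b' - b)) by ring.
  assert (Hdel : del * D <= eps).
  { apply Rle_trans with (eps / D * D). apply Rmult_le_compat_r; lra. right; field; lra. }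
  eapply Rle_lt_trans. apply Rabs_triang.
  eapply Rle_lt_trans. apply Rplus_le_compat_r. apply Rabs_triang.
  rewrite !Rabs_mult.
  assert (0 <= Rabs (a' - a)) by apply Rabs_pos.
  assert (0 <= Rabs (b' - b)) by apply Rabs_pos.
  pose proof (Rabs_pos a). pose proof (Rabs_pos b).
  assert (Rabs (a' - a) * Rabs (b' - b) <= del * 1) by (apply Rmult_le_compat; lra).
  assert (Rabs (a' - a) * Rabs b <= del * Rabs b) by (apply Rmult_le_compat_r; lra).
  assert (Rabs a * Rabs (b' - b) <= Rabs a * del) by (apply Rmult_le_compat_l; lra).
  assert (del * 1 + del * Rabs b + Rabs a * del < del * D).
  { unfold D. assert (0 < del). { unfold del. apply Rmin_pos. lra. apply Rdiv_lt_0_compat; lra. } nra. }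
  lra.
Qed.

Lemma cont_plus2 : forall a b eps, 0 < eps -> exists del, 0 < del /\ forall a' b', Rabs (a' - a) < del -> Rabs (b' - b) < del -> Rabs (a' + b' - (a + b)) < eps.
Proof.
  intros a b eps He. exists (eps/2). split. lra. intros a' b' Ha Hb.
  replace (a' + b' - (a + b)) with ((a' - a) + (b' - b)) by ring.
  eapply Rle_lt_trans. apply Rabs_triang. lra.
Qed.

Lemma TC_mult d g1 g2 : TC d g1 -> TC d g2 -> TC d (fun y => g1 y * g2 y).
Proof. intros. apply (TC_op2 d Rmult); auto. apply cont_mult2. Qed.

Lemma TC_plus d g1 g2 : TC d g1 -> TC d g2 -> TC d (fun y => g1 y + g2 y).
Proof. intros. apply (TC_op2 d Rplus); auto. apply cont_plus2. Qed.

Lemma TC_const d c : TC d (fun _ => c).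
Proof. intros x eps He. exists 1. split. lra. intros. rewrite Rminus_diag, Rabs_R0. auto. Qed.

Lemma TC_coord d j : (j < d)%nat -> TC d (fun y => y j).
Proof. intros Hj x eps He. exists eps. split; auto. Qed.

Lemma TC_comp d (h : R -> R) g : (forall t, continuity_pt h t) -> TC d g -> TC d (fun y => h (g y)).
Proof.
  intros Hh Hg x eps He.
  destruct (cpt_eps h (g x) (Hh _) eps He) as [del [Hd H]].
  destruct (Hg x del Hd) as [d1 [Hd1 H1]].
  exists d1. split; auto.
Qed.

Lemma TC_minus d g1 g2 : TC d g1 -> TC d g2 -> TC d (fun y => g1 y - g2 y).
Proof.
  intros H1 H2. unfold Rminus. apply TC_plus; auto.
  apply (TC_comp d Ropp); auto. intros t. apply continuity_pt_opp. apply continuity_pt_id.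
Qed.

Lemma TC_sum d (F : nat -> (nat -> R) -> R) M :
  (forall i, TC d (F i)) -> TC d (fun y => sum_f_R0 (fun i => F i y) M).
Proof.
  intros HF. induction M; simpl. apply HF. apply TC_plus; auto.
Qed.

Fixpoint prodR (n : nat) (g : nat -> R) : R :=
  match n with O => 1 | S n' => prodR n' g * g n' end.

Lemma TC_prodR d n (G : nat -> (nat -> R) -> R) :
  (forall j, (j < n)%nat -> TC d (G j)) -> TC d (fun y => prodR n (fun j => G j y)).
Proof.
  induction n; intros HG; simpl. apply TC_const.
  apply TC_mult. apply IHn. intros; apply HG; lia. apply HG; lia.
Qed.

Lemma cont_sum (F : nat -> R -> R) M t :
  (forall i, continuity_pt (F i) t) -> continuity_pt (fun u => sum_f_R0 (fun i => F i u) M) t.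
Proof.
  intros HF. induction M; simpl. apply HF. apply continuity_pt_plus; auto.
Qed.

Lemma RInt_lin (h1 h2 : R -> R) a b u v : ex_RInt h1 a b -> ex_RInt h2 a b ->
  RInt (fun t => u * h1 t + v * h2 t) a b = u * RInt h1 a b + v * RInt h2 a b.
Proof.
  intros H1 H2.
  assert (E1 : RInt (fun t => u * h1 t) a b = u * RInt h1 a b) by exact (RInt_scal (V:=R_CompleteNormedModule) h1 a b u H1).
  assert (E2 : RInt (fun t => v * h2 t) a b = v * RInt h2 a b) by exact (RInt_scal (V:=R_CompleteNormedModule) h2 a b v H2).
  assert (X1 : ex_RInt (fun t => u * h1 t) a b) by exact (ex_RInt_scal (V:=R_CompleteNormedModule) h1 a b u H1).
  assert (X2 : ex_RInt (fun t => v * h2 t) a b) by exact (ex_RInt_scal (V:=R_CompleteNormedModule) h2 a b v H2).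
  rewrite <- E1, <- E2.
  exact (RInt_plus (V:=R_CompleteNormedModule) _ _ a b X1 X2).
Qed.

Definition I1 (h : R -> R) := Rint h (-(1/2)) (1/2).

Lemma I1_RInt h : (forall t, continuity_pt h t) -> I1 h = RInt h (-(1/2)) (1/2).
Proof. intros. unfold I1. apply Rint_RInt; auto. lra. Qed.

Lemma I1_lin h1 h2 u v : (forall t, continuity_pt h1 t) -> (forall t, continuity_pt h2 t) ->
  I1 (fun t => u * h1 t + v * h2 t) = u * I1 h1 + v * I1 h2.
Proof.
  intros H1 H2. rewrite !I1_RInt; auto.
  apply RInt_lin; apply cont_exRInt; auto.
  intros t. apply continuity_pt_plus; apply continuity_pt_mult; auto; apply continuity_pt_const; intros ? ?; auto.
Qed.

Lemma I1_le h1 h2 : (forall t, continuity_pt h1 t) -> (forall t, continuity_pt h2 t) ->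
  (forall t, -(1/2) <= t <= 1/2 -> h1 t <= h2 t) -> I1 h1 <= I1 h2.
Proof.
  intros H1 H2 H. rewrite !I1_RInt; auto.
  apply RInt_le. lra. apply cont_exRInt; auto. apply cont_exRInt; auto.
  intros t Ht; apply H; lra.
Qed.

Lemma I1_const c : I1 (fun _ => c) = c.
Proof.
  rewrite I1_RInt. 2:{ intros; apply continuity_pt_const; intros ? ?; auto. }
  rewrite RInt_const. unfold scal. simpl. unfold mult. simpl. field.
Qed.

Lemma TC_upd d G x n t : TC d G -> continuity_pt (fun u => G (updR x n u)) t.
Proof.
  intros HG. apply eps_cpt. intros eps He.
  destruct (HG (updR x n t) eps He) as [del [Hd H]].
  exists del; split; auto. intros u Hu. apply H. intros j Hj. unfold updR.
  destruct (Nat.eqb j n); auto. rewrite Rminus_diag, Rabs_R0; auto.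
Qed.

Lemma TC_integ d g n : TC d g -> TC d (integ n g).
Proof.
  intros Hg. induction n. simpl. exact Hg.
  intros x eps He.
  set (G := integ n g).
  set (S := fun u v => exists del, 0 < del /\ forall s, u <= s <= v -> forall y,
     (forall j, (j < d)%nat -> Rabs (y j - x j) < del) -> Rabs (G (updR y n s) - G (updR x n s)) <= eps / 2).
  assert (HS : S (-(1/2)) (1/2)).
  { apply compact_local. lra.
    - intros u v w [d1 [Hd1 H1]] [d2 [Hd2 H2]]. exists (Rmin d1 d2). split. apply Rmin_pos; auto.
      intros s Hs y Hy. destruct (Rle_dec s v).
      + apply H1. lra. intros j Hj. specialize (Hy j Hj). pose proof (Rmin_l d1 d2); lra.
      + apply H2. lra. intros j Hj. specialize (Hy j Hj). pose proof (Rmin_r d1 d2); lra.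
    - intros t Ht. assert (He4 : 0 < eps / 4) by lra.
      destruct (IHn (updR x n t) (eps/4) He4) as [dt [Hdt Ht']].
      exists (dt / 2). split. lra. intros u v Hu Hv. exists (dt / 2). split. lra.
      intros s Hs y Hy.
      assert (A1 : Rabs (G (updR y n s) - G (updR x n t)) < eps / 4).
      { apply Ht'. intros j Hj. unfold updR. destruct (Nat.eqb j n).
        apply Rabs_def1; lra. specialize (Hy j Hj). lra. }
      assert (A2 : Rabs (G (updR x n s) - G (updR x n t)) < eps / 4).
      { apply Ht'. intros j Hj. unfold updR. destruct (Nat.eqb j n).
        apply Rabs_def1; lra. rewrite Rminus_diag, Rabs_R0; lra. }
      replace (G (updR y n s) - G (updR x n s)) with ((G (updR y n s) - G (updR x n t)) - (G (updR x n s) - G (updR x n t))) by ring.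
      eapply Rle_trans. apply Rabs_triang. rewrite Rabs_Ropp. lra. }
  destruct HS as [del [Hd H]].
  exists del. split; auto. intros y Hy. simpl. fold G.
  assert (C1 : forall t, continuity_pt (fun u => G (updR y n u)) t) by (intros; apply (TC_upd d); apply IHn).
  assert (C2 : forall t, continuity_pt (fun u => G (updR x n u)) t) by (intros; apply (TC_upd d); apply IHn).
  assert (E : Rint (fun t => G (updR y n t)) (-(1/2)) (1/2) - Rint (fun t => G (updR x n t)) (-(1/2)) (1/2)
     = I1 (fun t => 1 * G (updR y n t) + (-1) * G (updR x n t))).
  { rewrite I1_lin; auto. unfold I1. ring. }
  rewrite E. rewrite I1_RInt.
  2:{ intros t. apply continuity_pt_plus; apply continuity_pt_mult; auto; apply continuity_pt_const; intros ? ?; auto. }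
  eapply Rle_lt_trans. apply abs_RInt_le_const with (M := eps / 2). lra.
  apply cont_exRInt. intros t. apply continuity_pt_plus; apply continuity_pt_mult; auto; apply continuity_pt_const; intros ? ?; auto.
  intros t Ht. replace (1 * G (updR y n t) + -1 * G (updR x n t)) with (G (updR y n t) - G (updR x n t)) by ring.
  apply H; auto. lra.
Qed.

Lemma integ_lin d g1 g2 n : TC d g1 -> TC d g2 -> forall x a b,
  integ n (fun y => a * g1 y + b * g2 y) x = a * integ n g1 x + b * integ n g2 x.
Proof.
  intros H1 H2. induction n; intros x a b. reflexivity.
  simpl. rewrite (functional_extensionality _ (fun t => a * integ n g1 (updR x n t) + b * integ n g2 (updR x n t)) (fun t => IHn (updR x n t) a b)).
  fold (I1 (fun t => a * integ n g1 (updR x n t) + b * integ n g2 (updR x n t))).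
  rewrite I1_lin. reflexivity.
  intros; apply (TC_upd d), TC_integ; auto.
  intros; apply (TC_upd d), TC_integ; auto.
Qed.

Definition cube (n : nat) (y : nat -> R) := forall j, (j < n)%nat -> -(1/2) <= y j <= 1/2.

Lemma integ_le d g1 g2 n : TC d g1 -> TC d g2 -> forall x,
  (forall y, cube n y -> (forall j, (n <= j)%nat -> y j = x j) -> g1 y <= g2 y) ->
  integ n g1 x <= integ n g2 x.
Proof.
  intros H1 H2. induction n; intros x H. simpl. apply H. intros j Hj; lia. intros; auto.
  simpl. fold (I1 (fun t => integ n g1 (updR x n t))). fold (I1 (fun t => integ n g2 (updR x n t))).
  apply I1_le. intros; apply (TC_upd d), TC_integ; auto. intros; apply (TC_upd d), TC_integ; auto.
  intros t Ht. apply IHn. intros y Hy Hyx. apply H.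
  - intros j Hj. destruct (Nat.eq_dec j n). subst. rewrite Hyx by lia. unfold updR. rewrite Nat.eqb_refl. auto.
    apply Hy. lia.
  - intros j Hj. rewrite Hyx by lia. unfold updR. destruct (Nat.eqb_spec j n). lia. auto.
Qed.

Lemma integ_const n c x : integ n (fun _ => c) x = c.
Proof.
  revert x. induction n; intros x. reflexivity.
  simpl. rewrite (functional_extensionality _ (fun _ => c) (fun t => IHn (updR x n t))).
  apply I1_const.
Qed.

Lemma integ_sum d n (F : nat -> (nat -> R) -> R) M x : (forall i, TC d (F i)) ->
  integ n (fun y => sum_f_R0 (fun i => F i y) M) x = sum_f_R0 (fun i => integ n (F i) x) M.
Proof.
  intros HF. induction M. reflexivity.
  simpl. rewrite <- IHM.
  transitivity (integ n (fun y => 1 * sum_f_R0 (fun i => F i y) M + 1 * F (S M) y) x).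
  f_equal. apply functional_extensionality; intros; ring.
  rewrite (integ_lin d). ring. apply TC_sum; auto. auto.
Qed.

Lemma integ_scal d g n c x : TC d g -> integ n (fun y => c * g y) x = c * integ n g x.
Proof.
  intros Hg. transitivity (integ n (fun y => c * g y + 0 * g y) x).
  f_equal. apply functional_extensionality; intros; ring.
  rewrite (integ_lin d); auto. ring.
Qed.

Lemma integ_mulc d n c g x : TC d c -> TC d g ->
  (forall y y', (forall j, (n <= j)%nat -> y j = y' j) -> c y = c y') ->
  integ n (fun y => c y * g y) x = c x * integ n g x.
Proof.
  intros Hc Hg. revert x. induction n; intros x Hdep. reflexivity.
  simpl.
  assert (E : forall t, integ n (fun y => c y * g y) (updR x n t) = c x * integ n g (updR x n t)).
  { intros t. rewrite IHn. f_equal. apply Hdep. intros j Hj. unfold updR. destruct (Nat.eqb_spec j n). lia. auto.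
    intros y y' Hyy. apply Hdep. intros j Hj. apply Hyy. lia. }
  rewrite (functional_extensionality _ _ E).
  fold (I1 (fun t => c x * integ n g (updR x n t))).
  transitivity (I1 (fun t => c x * integ n g (updR x n t) + 0 * integ n g (updR x n t))).
  f_equal. apply functional_extensionality; intros; ring.
  rewrite I1_lin. unfold I1. ring. intros; apply (TC_upd d), TC_integ; auto. intros; apply (TC_upd d), TC_integ; auto.
Qed.

Lemma integ_prod d n (psi : nat -> R -> R) c x : (n <= d)%nat ->
  (forall j t, continuity_pt (psi j) t) -> TC d c ->
  (forall y y', (forall j, (n <= j)%nat -> y j = y' j) -> c y = c y') ->
  integ n (fun y => prodR n (fun j => psi j (y j)) * c y) x = prodR n (fun j => I1 (psi j)) * c x.
Proof.
  intros Hn Hpsi. revert c x. induction n; intros c x Hc Hdep. simpl. ring.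
  simpl.
  assert (E : forall t, integ n (fun y => prodR n (fun j => psi j (y j)) * psi n (y n) * c y) (updR x n t)
       = prodR n (fun j => I1 (psi j)) * (psi n t * c x)).
  { intros t.
    transitivity (integ n (fun y => prodR n (fun j => psi j (y j)) * (psi n (y n) * c y)) (updR x n t)).
    f_equal. apply functional_extensionality; intros; ring.
    rewrite IHn. f_equal. unfold updR. rewrite Nat.eqb_refl. f_equal. apply Hdep.
    intros j Hj. destruct (Nat.eqb_spec j n). lia. auto. lia.
    apply TC_mult; auto. apply (TC_comp d (psi n)); auto. apply TC_coord. lia.
    intros y y' Hyy. rewrite (Hyy n) by lia. f_equal. apply Hdep. intros; apply Hyy; lia. }
  rewrite (functional_extensionality _ _ E).
  fold (I1 (fun t => prodR n (fun j => I1 (psi j)) * (psi n t * c x))).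
  transitivity (I1 (fun t => (prodR n (fun j => I1 (psi j)) * c x) * psi n t + 0 * psi n t)).
  f_equal. apply functional_extensionality; intros; ring.
  rewrite I1_lin; auto. ring.
Qed.

Lemma RInt_cos (v : Z) phi : RInt (fun t => cos (2*PI*(t*IZR v) + phi)) (-(1/2)) (1/2) = if Z.eqb v 0 then cos phi else 0.
Proof.
  destruct (Z.eqb_spec v 0) as [->|Hv].
  - rewrite (RInt_ext _ (fun _ => cos phi)). rewrite RInt_const. unfold scal; simpl; unfold mult; simpl. field.
    intros. f_equal. simpl. ring.
  - assert (HvR : IZR v <> 0) by (apply not_0_IZR; auto).
    apply is_RInt_unique.
    assert (H := is_RInt_derive (V:=R_CompleteNormedModule) (fun t => sin (2*PI*(t*IZR v) + phi) / (2*PI*IZR v)) (fun t => cos (2*PI*(t*IZR v) + phi)) (-(1/2)) (1/2)).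
    assert (E : minus (sin (2*PI*(1/2*IZR v) + phi) / (2*PI*IZR v)) (sin (2*PI*(-(1/2)*IZR v) + phi) / (2*PI*IZR v)) = 0).
    { unfold minus, plus, opp; simpl.
      replace (2*PI*(1/2*IZR v) + phi) with (phi + IZR v * PI) by field.
      replace (2*PI*(-(1/2)*IZR v) + phi) with (phi - IZR v * PI) by field.
      rewrite sin_plus, sin_minus.
      rewrite (sin_eq_0_1 (IZR v * PI)) by (exists v; auto).
      field. split; auto. apply PI_neq0. }
    rewrite <- E. apply H.
    + intros x _. auto_derive. auto. field. split; auto. apply PI_neq0.
    + intros x _. apply continuity_pt_filterlim. apply continuity_pt_comp with (f1 := fun t => 2*PI*(t*IZR v) + phi).
      reg. apply continuity_cos.
Qed.

Lemma cont_cosl a b t : continuity_pt (fun u => cos (a * u + b)) t.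
Proof. apply continuity_pt_comp with (f1 := fun u => a * u + b). reg. apply continuity_cos. Qed.

Lemma I1_cos (v : Z) phi : I1 (fun t => cos (2*PI*(t*IZR v) + phi)) = if Z.eqb v 0 then cos phi else 0.
Proof.
  rewrite I1_RInt. apply RInt_cos. intros t.
  apply continuity_pt_comp with (f1 := fun t => 2*PI*(t*IZR v) + phi). reg. apply continuity_cos.
Qed.

Lemma I1_sum (F : nat -> R -> R) M : (forall i t, continuity_pt (F i) t) ->
  I1 (fun t => sum_f_R0 (fun i => F i t) M) = sum_f_R0 (fun i => I1 (F i)) M.
Proof.
  intros HF. induction M. reflexivity. simpl. rewrite <- IHM.
  transitivity (I1 (fun t => 1 * sum_f_R0 (fun i => F i t) M + 1 * F (S M) t)).
  f_equal; apply functional_extensionality; intros; ring.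
  rewrite I1_lin. ring. intros; apply cont_sum; auto. auto.
Qed.

Lemma sum_lin2 (F G : nat -> R) a b N :
  sum_f_R0 (fun i => a * F i + b * G i) N = a * sum_f_R0 F N + b * sum_f_R0 G N.
Proof. induction N; simpl. ring. rewrite IHN. ring. Qed.

Lemma sum_front (h : nat -> R) m : sum_f_R0 h (S m) = h 0%nat + sum_f_R0 (fun i => h (S i)) m.
Proof. induction m. simpl. ring. rewrite (tech5 h (S m)). rewrite IHm. simpl. ring. Qed.

Lemma sum_zero_tail (h : nat -> R) N : (forall n, (1 <= n)%nat -> h n = 0) -> sum_f_R0 h N = h 0%nat.
Proof. intros H. induction N. reflexivity. simpl. rewrite IHN, (H (S N)). ring. lia. Qed.

Definition zi (N i : nat) : Z := (Z.of_nat i - Z.of_nat N)%Z.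

Lemma symsum (g : Z -> R) N :
  sum_f_R0 (fun i => g (zi N i)) (2*N) = sum_f_R0 (fun n => g (Z.of_nat n) + g (- Z.of_nat n)%Z) N - g 0%Z.
Proof.
  induction N.
  - simpl. unfold zi. simpl. ring.
  - replace (2 * S N)%nat with (S (S (2 * N))) by lia.
    rewrite tech5. rewrite sum_front.
    rewrite (sum_eq (fun i => g (zi (S N) (S i))) (fun i => g (zi N i))).
    2:{ intros i _. f_equal. unfold zi. lia. }
    rewrite IHN. rewrite (tech5 (fun n => g (Z.of_nat n) + g (- Z.of_nat n)%Z) N).
    replace (zi (S N) 0) with (- Z.of_nat (S N))%Z by (unfold zi; lia).
    replace (zi (S N) (S (S (2 * N)))) with (Z.of_nat (S N)) by (unfold zi; lia).
    ring.
Qed.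

Definition kc (c : Z -> R) (N : nat) (t : R) : R :=
  sum_f_R0 (fun i => c (zi N i) * cos (2 * PI * (t * IZR (zi N i)))) (2 * N).

Definition cF (N : nat) (v : Z) : R := Rmax 0 (1 - IZR (Z.abs v) / INR (S N)).
Definition kF (N : nat) := kc (cF N) N.

Lemma cF_bounds N v : 0 <= cF N v <= 1.
Proof.
  unfold cF. split. apply Rmax_l. apply Rmax_lub. lra.
  assert (0 <= IZR (Z.abs v) / INR (S N)).
  { apply Rdiv_le_0_compat. apply IZR_le. lia. apply lt_0_INR. lia. }
  lra.
Qed.

Lemma cF_even N v : cF N (- v) = cF N v.
Proof. unfold cF. rewrite Z.abs_opp. auto. Qed.

Lemma cF_0 N : cF N 0 = 1.
Proof. unfold cF. replace (1 - IZR (Z.abs 0) / INR (S N)) with 1. apply Rmax_right; lra. simpl IZR. unfold Rdiv. rewrite Rmult_0_l. ring. Qed.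

Lemma cont_kc c N t : continuity_pt (kc c N) t.
Proof.
  unfold kc. apply cont_sum. intros i. apply continuity_pt_mult. apply continuity_pt_const; intros ? ?; auto.
  apply continuity_pt_comp with (f1 := fun t => 2 * PI * (t * IZR (zi N i))). reg. apply continuity_cos.
Qed.

Lemma I1_kF N a : I1 (fun t => kF N (t - a)) = 1.
Proof.
  unfold kF, kc.
  transitivity (I1 (fun t => sum_f_R0 (fun i => cF N (zi N i) * cos (2 * PI * (t * IZR (zi N i))
      + (- (2 * PI * (a * IZR (zi N i)))))) (2 * N))).
  { f_equal. apply functional_extensionality; intros t. apply sum_eq; intros i _. f_equal. f_equal. ring. }
  rewrite I1_sum.
  2:{ intros i t. apply continuity_pt_mult. apply continuity_pt_const; intros ? ?; auto.
      apply continuity_pt_comp with (f1 := fun t => 2 * PI * (t * IZR (zi N i)) + - (2 * PI * (a * IZR (zi N i)))). reg. apply continuity_cos. }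
  rewrite (sum_eq _ (fun i => (fun v => cF N v * (if Z.eqb v 0 then cos (- (2 * PI * (a * IZR v))) else 0)) (zi N i))).
  2:{ intros i _. simpl. rewrite <- I1_cos.
      transitivity (I1 (fun t => cF N (zi N i) * cos (2 * PI * (t * IZR (zi N i)) + - (2 * PI * (a * IZR (zi N i)))) + 0 * 0)).
      f_equal; apply functional_extensionality; intros; ring.
      rewrite (I1_lin _ (fun _ => 0)). rewrite I1_const. ring.
      intros t. apply continuity_pt_comp with (f1 := fun t => 2 * PI * (t * IZR (zi N i)) + - (2 * PI * (a * IZR (zi N i)))). reg. apply continuity_cos.
      intros; apply continuity_pt_const; intros ? ?; auto. }
  rewrite (symsum (fun v => cF N v * (if Z.eqb v 0 then cos (- (2 * PI * (a * IZR v))) else 0))). rewrite sum_zero_tail.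
  - simpl. rewrite cF_0. replace (- (2 * PI * (a * 0))) with 0 by ring. rewrite cos_0. ring.
  - intros n Hn. destruct (Z.eqb_spec (Z.of_nat n) 0). lia. destruct (Z.eqb_spec (- Z.of_nat n) 0). lia. ring.
Qed.

Definition Ccos (N : nat) (t : R) := sum_f_R0 (fun a => cos (2 * PI * (t * INR a))) N.
Definition Csin (N : nat) (t : R) := sum_f_R0 (fun a => sin (2 * PI * (t * INR a))) N.
Definition Wf (N : nat) (t : R) := sum_f_R0 (fun n => (INR (S N) - INR n) * cos (2 * PI * (t * INR n))) N.

Lemma Ccos_S N t : Ccos (S N) t = 1 + cos (2*PI*t) * Ccos N t - sin (2*PI*t) * Csin N t.
Proof.
  unfold Ccos, Csin. rewrite sum_front. simpl INR at 1. rewrite Rmult_0_r, Rmult_0_r, cos_0.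
  rewrite (sum_eq _ (fun i => cos (2*PI*t) * cos (2 * PI * (t * INR i)) + (- sin (2*PI*t)) * sin (2 * PI * (t * INR i)))).
  rewrite sum_lin2. ring.
  intros i _. rewrite S_INR. replace (2 * PI * (t * (INR i + 1))) with (2 * PI * (t * INR i) + 2*PI*t) by ring.
  rewrite cos_plus. ring.
Qed.

Lemma Csin_S N t : Csin (S N) t = sin (2*PI*t) * Ccos N t + cos (2*PI*t) * Csin N t.
Proof.
  unfold Ccos, Csin. rewrite sum_front. simpl INR at 1. rewrite Rmult_0_r, Rmult_0_r, sin_0.
  rewrite (sum_eq _ (fun i => sin (2*PI*t) * cos (2 * PI * (t * INR i)) + cos (2*PI*t) * sin (2 * PI * (t * INR i)))).
  rewrite sum_lin2. ring.
  intros i _. rewrite S_INR. replace (2 * PI * (t * (INR i + 1))) with (2 * PI * (t * INR i) + 2*PI*t) by ring.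
  rewrite sin_plus. ring.
Qed.

Lemma Ccos_S' N t : Ccos (S N) t = Ccos N t + cos (2 * PI * (t * INR (S N))).
Proof. reflexivity. Qed.

Lemma Wf_S N t : Wf (S N) t = Wf N t + Ccos (S N) t.
Proof.
  unfold Wf. rewrite tech5. rewrite Ccos_S'.
  rewrite (sum_eq (fun n => (INR (S (S N)) - INR n) * cos (2 * PI * (t * INR n))) (fun n => 1 * ((INR (S N) - INR n) * cos (2 * PI * (t * INR n))) + 1 * cos (2 * PI * (t * INR n)))).
  rewrite sum_lin2. fold (Ccos N t). replace (INR (S (S N)) - INR (S N)) with 1. ring.
  rewrite (S_INR (S N)). ring.
  intros i _. rewrite (S_INR (S N)). ring.
Qed.

Lemma fejer_Q N t : Ccos N t ^ 2 + Csin N t ^ 2 = 2 * Wf N t - INR (S N).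
Proof.
  induction N.
  - unfold Ccos, Csin, Wf. simpl. rewrite !Rmult_0_r, cos_0, sin_0. ring.
  - rewrite Wf_S.
    assert (E1 := Ccos_S N t). assert (E2 := Csin_S N t).
    assert (Hsc := sin2_cos2 (2*PI*t)). unfold Rsqr in Hsc.
    rewrite (S_INR (S N)).
    assert (Csin (S N) t ^ 2 + (Ccos (S N) t - 1) ^ 2 = (sin (2*PI*t) ^ 2 + cos (2*PI*t)^2) * (Ccos N t ^ 2 + Csin N t ^ 2)).
    { rewrite E2. replace (Ccos (S N) t - 1) with (cos (2*PI*t) * Ccos N t - sin (2*PI*t) * Csin N t) by lra. ring. }
    replace (sin (2*PI*t) ^ 2 + cos (2*PI*t)^2) with 1 in H by (simpl; lra).
    rewrite IHN in H. rewrite S_INR in H. nra.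
Qed.

Lemma kF_one_sided N t : kF N t = 2 * sum_f_R0 (fun n => cF N (Z.of_nat n) * cos (2 * PI * (t * INR n))) N - 1.
Proof.
  unfold kF, kc. rewrite (symsum (fun v => cF N v * cos (2 * PI * (t * IZR v)))).
  simpl IZR at 3. rewrite Rmult_0_r, Rmult_0_r, cos_0, cF_0.
  rewrite (sum_eq _ (fun n => 2 * (cF N (Z.of_nat n) * cos (2 * PI * (t * INR n))) + 0 * 0)).
  rewrite sum_lin2. ring.
  intros i _. rewrite cF_even, opp_IZR, <- INR_IZR_INZ.
  replace (2 * PI * (t * - INR i)) with (- (2 * PI * (t * INR i))) by ring. rewrite cos_neg. ring.
Qed.

Lemma kF_fejer N t : INR (S N) * kF N t = Ccos N t ^ 2 + Csin N t ^ 2.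
Proof.
  rewrite fejer_Q, kF_one_sided. unfold Wf.
  assert (HM : 0 < INR (S N)) by (apply lt_0_INR; lia).
  assert (E : INR (S N) * sum_f_R0 (fun n => cF N (Z.of_nat n) * cos (2 * PI * (t * INR n))) N
     = sum_f_R0 (fun n => (INR (S N) - INR n) * cos (2 * PI * (t * INR n))) N).
  { rewrite scal_sum. apply sum_eq. intros i Hi.
    unfold cF. rewrite Rmax_right. rewrite (Z.abs_eq (Z.of_nat i) (Nat2Z.is_nonneg i)), <- INR_IZR_INZ. field. lra.
    rewrite (Z.abs_eq (Z.of_nat i) (Nat2Z.is_nonneg i)), <- INR_IZR_INZ.
    assert (INR i <= INR N) by (apply le_INR; auto). rewrite S_INR in *.
    assert (INR i / (INR N + 1) <= 1). { apply Rmult_le_reg_r with (INR N + 1). lra. field_simplify; lra. }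
    lra. }
  rewrite <- E. ring.
Qed.

Lemma kF_nonneg N t : 0 <= kF N t.
Proof.
  assert (HM : 0 < INR (S N)) by (apply lt_0_INR; lia).
  pose proof (kF_fejer N t).
  assert (0 <= Ccos N t ^ 2 + Csin N t ^ 2) by nra. nra.
Qed.

Lemma tele_cos N t : 2 * sin (PI * t) * Ccos N t = sin (2 * PI * (t * INR N) + PI * t) + sin (PI * t).
Proof.
  induction N.
  - unfold Ccos; simpl. replace (2 * PI * (t * 0)) with 0 by ring. rewrite cos_0, Rplus_0_l. ring.
  - rewrite Ccos_S'. rewrite Rmult_plus_distr_l, IHN. rewrite S_INR.
    replace (2 * PI * (t * (INR N + 1)) + PI * t) with ((2 * PI * (t * INR N) + PI * t) + 2 * (PI * t)) by ring.
    replace (2 * PI * (t * (INR N + 1))) with ((2 * PI * (t * INR N) + PI * t) + PI * t) by ring.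
    set (X := 2 * PI * (t * INR N) + PI * t). set (u := PI * t).
    rewrite sin_plus, cos_plus, sin_2a, cos_2a. ring_simplify.
    assert (Hs := sin2_cos2 u). unfold Rsqr in Hs.
    replace (cos u ^ 2) with (1 - sin u ^ 2) by (simpl; lra). ring.
Qed.

Lemma tele_sin N t : 2 * sin (PI * t) * Csin N t = cos (PI * t) - cos (2 * PI * (t * INR N) + PI * t).
Proof.
  induction N.
  - unfold Csin; simpl. replace (2 * PI * (t * 0)) with 0 by ring. rewrite sin_0, Rplus_0_l. ring.
  - unfold Csin; rewrite tech5; fold (Csin N t). rewrite Rmult_plus_distr_l, IHN. rewrite S_INR.
    replace (2 * PI * (t * (INR N + 1)) + PI * t) with ((2 * PI * (t * INR N) + PI * t) + 2 * (PI * t)) by ring.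
    replace (2 * PI * (t * (INR N + 1))) with ((2 * PI * (t * INR N) + PI * t) + PI * t) by ring.
    set (X := 2 * PI * (t * INR N) + PI * t). set (u := PI * t).
    rewrite sin_plus, cos_plus, sin_2a, cos_2a. ring_simplify.
    assert (Hs := sin2_cos2 u). unfold Rsqr in Hs.
    replace (cos u ^ 2) with (1 - sin u ^ 2) by (simpl; lra). ring.
Qed.

Lemma fejer_far N t : sin (PI * t) ^ 2 * kF N t <= 1 / INR (S N).
Proof.
  assert (HM : 0 < INR (S N)) by (apply lt_0_INR; lia).
  assert (H1 := tele_cos N t). assert (H2 := tele_sin N t).
  set (X := 2 * PI * (t * INR N) + PI * t) in *. set (u := PI * t) in *.
  assert (Hb : sin u ^ 2 * (Ccos N t ^ 2 + Csin N t ^ 2) <= 1).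
  { assert (E : 4 * (sin u ^ 2 * (Ccos N t ^ 2 + Csin N t ^ 2)) = (sin X + sin u) ^ 2 + (cos u - cos X) ^ 2).
    { rewrite <- H1, <- H2. ring. }
    assert (Hs1 := sin2_cos2 u). assert (Hs2 := sin2_cos2 X). unfold Rsqr in *.
    assert (Hc := COS_bound (X + u)). rewrite cos_plus in Hc. nra. }
  rewrite <- kF_fejer in Hb.
  apply Rmult_le_reg_l with (INR (S N)). auto.
  replace (INR (S N) * (1 / INR (S N))) with 1 by (field; lra). nra.
Qed.

Lemma boxsum_lin n N F G a b m0 :
  boxsum n N (fun m => a * F m + b * G m) m0 = a * boxsum n N F m0 + b * boxsum n N G m0.
Proof.
  revert m0. induction n; intros m0. reflexivity.
  simpl. rewrite (sum_eq _ (fun i => a * boxsum n N F (updZ m0 n (Z.of_nat i - Z.of_nat N)) + b * boxsum n N G (updZ m0 n (Z.of_nat i - Z.of_nat N)))).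
  apply sum_lin2. intros; apply IHn.
Qed.

Lemma boxsum_le n N F G m0 : (forall m, F m <= G m) -> boxsum n N F m0 <= boxsum n N G m0.
Proof.
  intros H. revert m0. induction n; intros m0. apply H.
  simpl. apply sum_Rle. intros; apply IHn.
Qed.

Lemma boxsum_factor n N A F m0 :
  (forall m, (forall j, (n <= j)%nat -> m j = m0 j) -> A m = A m0) ->
  boxsum n N (fun m => A m * F m) m0 = A m0 * boxsum n N F m0.
Proof.
  revert m0. induction n; intros m0 HA. reflexivity.
  simpl. rewrite scal_sum. apply sum_eq. intros i _.
  rewrite IHn. rewrite Rmult_comm. f_equal.
  transitivity (A m0). apply HA. intros j Hj. unfold updZ. destruct (Nat.eqb_spec j n). lia. auto. auto.
  intros m Hm. transitivity (A m0). apply HA. intros j Hj. rewrite Hm by lia. unfold updZ. destruct (Nat.eqb_spec j n). lia. auto.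
  symmetry. apply HA. intros j Hj. unfold updZ. destruct (Nat.eqb_spec j n). lia. auto.
Qed.

Lemma boxsum_indep n N F m m' :
  (forall m1 m2, (forall j, (j < n)%nat -> m1 j = m2 j) -> (forall j, (n <= j)%nat -> m1 j = m j /\ m2 j = m' j) -> F m1 = F m2) ->
  boxsum n N F m = boxsum n N F m'.
Proof.
  revert m m'. induction n; intros m m' H. simpl. apply H. intros; lia. intros; auto.
  simpl. apply sum_eq. intros i _. apply IHn.
  intros m1 m2 H12 Hr. apply H.
  - intros j Hj. destruct (Nat.eq_dec j n). subst. destruct (Hr n (le_n n)) as [E1 E2]. rewrite E1, E2. unfold updZ. rewrite Nat.eqb_refl. auto.
    apply H12; lia.
  - intros j Hj. destruct (Hr j ltac:(lia)) as [E1 E2]. rewrite E1, E2. unfold updZ. destruct (Nat.eqb_spec j n). lia. auto.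
Qed.

Definition prodZ (c : Z -> R) (n : nat) (m : nat -> Z) : R := prodR n (fun j => c (m j)).

Lemma prodR_ext n g1 g2 : (forall j, (j < n)%nat -> g1 j = g2 j) -> prodR n g1 = prodR n g2.
Proof. induction n; intros H; simpl. auto. rewrite IHn, H; auto. Qed.

Lemma dot_indep n w m m' : (forall j, (j < n)%nat -> m j = m' j) -> dot n w m = dot n w m'.
Proof. induction n; intros H; simpl. auto. rewrite IHn, H; auto. Qed.

Lemma prodZ_indep c n m m' : (forall j, (j < n)%nat -> m j = m' j) -> prodZ c n m = prodZ c n m'.
Proof. intros H. unfold prodZ. apply prodR_ext. intros; rewrite H; auto. Qed.

Lemma kc_sin_zero c N t : (forall v, c (- v)%Z = c v) ->
  sum_f_R0 (fun i => c (zi N i) * sin (2 * PI * (t * IZR (zi N i)))) (2 * N) = 0.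
Proof.
  intros Hc. rewrite (symsum (fun v => c v * sin (2 * PI * (t * IZR v)))).
  rewrite (sum_eq _ (fun _ => 0)). rewrite sum_cte. simpl IZR. rewrite Rmult_0_r, Rmult_0_r, sin_0. ring.
  intros i _. rewrite Hc, opp_IZR. replace (2 * PI * (t * - IZR (Z.of_nat i))) with (- (2 * PI * (t * IZR (Z.of_nat i)))) by ring.
  rewrite sin_neg. ring.
Qed.

Lemma box_kernel c N w : (forall v, c (- v)%Z = c v) -> forall n m0,
  boxsum n N (fun m => prodZ c n m * cos (2 * PI * dot n w m)) m0 = prodR n (fun j => kc c N (w j)) /\
  boxsum n N (fun m => prodZ c n m * sin (2 * PI * dot n w m)) m0 = 0.
Proof.
  intros Hc. induction n; intros m0.
  - simpl. unfold prodZ; simpl. rewrite Rmult_0_r, cos_0, sin_0. split; ring.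
  - set (P := fun m => prodZ c n m * cos (2 * PI * dot n w m)).
    set (Q := fun m => prodZ c n m * sin (2 * PI * dot n w m)).
    set (A1 := fun m : nat -> Z => c (m n) * cos (2 * PI * (w n * IZR (m n)))).
    set (A2 := fun m : nat -> Z => c (m n) * sin (2 * PI * (w n * IZR (m n)))).
    assert (HA1 : forall m1 m, (forall j, (n <= j)%nat -> m j = m1 j) -> A1 m = A1 m1).
    { intros m1 m H. unfold A1. rewrite H; auto. }
    assert (HA2 : forall m1 m, (forall j, (n <= j)%nat -> m j = m1 j) -> A2 m = A2 m1).
    { intros m1 m H. unfold A2. rewrite H; auto. }
    assert (Ecos : forall m, prodZ c (S n) m * cos (2 * PI * dot (S n) w m) = 1 * (A1 m * P m) + (-1) * (A2 m * Q m)).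
    { intros m. unfold P, Q, A1, A2, prodZ. simpl. rewrite Rmult_plus_distr_l, cos_plus. ring. }
    assert (Esin : forall m, prodZ c (S n) m * sin (2 * PI * dot (S n) w m) = 1 * (A2 m * P m) + 1 * (A1 m * Q m)).
    { intros m. unfold P, Q, A1, A2, prodZ. simpl. rewrite Rmult_plus_distr_l, sin_plus. ring. }
    assert (Hv : forall i, A1 (updZ m0 n (zi N i)) = c (zi N i) * cos (2 * PI * (w n * IZR (zi N i))) /\
                           A2 (updZ m0 n (zi N i)) = c (zi N i) * sin (2 * PI * (w n * IZR (zi N i)))).
    { intros i. unfold A1, A2, updZ. rewrite Nat.eqb_refl. auto. }
    split.
    + rewrite (functional_extensionality _ _ Ecos). simpl.
      rewrite (sum_eq _ (fun i => (c (zi N i) * cos (2 * PI * (w n * IZR (zi N i)))) * prodR n (fun j => kc c N (w j)))).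
      rewrite <- scal_sum. unfold kc at 2. reflexivity.
      intros i _. rewrite boxsum_lin. rewrite !boxsum_factor by (apply HA1 || apply HA2).
      destruct (IHn (updZ m0 n (Z.of_nat i - Z.of_nat N))) as [E1 E2]. fold P in E1. fold Q in E2.
      rewrite E1, E2. destruct (Hv i) as [H1 H2]. unfold zi in H1, H2. rewrite H1. unfold zi. ring.
    + rewrite (functional_extensionality _ _ Esin). simpl.
      rewrite (sum_eq _ (fun i => (c (zi N i) * sin (2 * PI * (w n * IZR (zi N i)))) * prodR n (fun j => kc c N (w j)))).
      rewrite <- scal_sum. rewrite kc_sin_zero by auto. ring.
      intros i _. rewrite boxsum_lin. rewrite !boxsum_factor by (apply HA1 || apply HA2).
      destruct (IHn (updZ m0 n (Z.of_nat i - Z.of_nat N))) as [E1 E2]. fold P in E1. fold Q in E2.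
      rewrite E1, E2. destruct (Hv i) as [H1 H2]. unfold zi in H1, H2. rewrite H2. unfold zi. ring.
Qed.

Lemma shift1_nat d f : torus_fun d f -> forall x j k, (j < d)%nat -> f (updR x j (x j + INR k)) = f x.
Proof.
  intros [Hdep Hper] x j k Hj. induction k.
  - f_equal. apply functional_extensionality; intros i. unfold updR. destruct (Nat.eqb_spec i j). subst. simpl; ring. auto.
  - rewrite <- IHk. rewrite <- (Hper (updR x j (x j + INR k)) j Hj). f_equal.
    apply functional_extensionality; intros i. unfold updR. destruct (Nat.eqb_spec i j). rewrite Nat.eqb_refl. rewrite S_INR. ring. auto.
Qed.

Lemma shift1_Z d f : torus_fun d f -> forall x j z, (j < d)%nat -> f (updR x j (x j + IZR z)) = f x.
Proof.
  intros Hf x j z Hj. destruct (Z_le_gt_dec 0 z).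
  - replace z with (Z.of_nat (Z.to_nat z)) by lia. rewrite <- INR_IZR_INZ. apply (shift1_nat d); auto.
  - set (k := Z.to_nat (- z)).
    set (x' := updR x j (x j + IZR z)).
    assert (E : x = updR x' j (x' j + INR k)).
    { apply functional_extensionality; intros i. unfold x', updR. destruct (Nat.eqb_spec i j). subst. rewrite Nat.eqb_refl.
      unfold k. rewrite INR_IZR_INZ. rewrite Z2Nat.id by lia. rewrite opp_IZR. ring. auto. }
    transitivity (f (updR x' j (x' j + INR k))). symmetry. apply (shift1_nat d); auto. rewrite <- E. reflexivity.
Qed.

Lemma shift_vec d f : torus_fun d f -> forall y (n : nat -> Z), f (fun j => y j + IZR (n j)) = f y.
Proof.
  intros Hf y n.
  assert (H : forall D, (D <= d)%nat -> f (fun j => if Nat.ltb j D then y j + IZR (n j) else y j) = f y).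
  { induction D; intros HD.
    - reflexivity.
    - set (yD := fun j => if Nat.ltb j D then y j + IZR (n j) else y j).
      transitivity (f yD). 2:{ apply IHD. lia. }
      rewrite <- (shift1_Z d f Hf yD D (n D)) by lia. f_equal.
      apply functional_extensionality; intros j. unfold updR, yD.
      destruct (Nat.eqb_spec j D). subst. destruct (Nat.ltb_spec D D). lia. destruct (Nat.ltb_spec D (S D)). auto. lia.
      destruct (Nat.ltb_spec j (S D)); destruct (Nat.ltb_spec j D); auto; lia. }
  rewrite <- (H d (le_n d)). destruct Hf as [Hdep _]. apply Hdep. intros j Hj. destruct (Nat.ltb_spec j d). auto. lia.
Qed.

Definition nint (u : R) : Z :=
  let n0 := (up u - 1)%Z in if Rle_dec (u - IZR n0) (1/2) then n0 else (n0 + 1)%Z.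

Lemma nint_close u : Rabs (u - IZR (nint u)) <= 1/2.
Proof.
  unfold nint. destruct (archimed u) as [H1 H2].
  rewrite minus_IZR. simpl. destruct (Rle_dec (u - (IZR (up u) - 1)) (1/2)).
  - rewrite minus_IZR. apply Rabs_le. simpl IZR. lra.
  - rewrite plus_IZR, minus_IZR. simpl IZR. apply Rabs_le. lra.
Qed.

Lemma sin_sq_shift u (n : Z) : sin (PI * u) ^ 2 = sin (PI * (u - IZR n)) ^ 2.
Proof.
  replace (PI * u) with (PI * (u - IZR n) + IZR n * PI) by ring.
  rewrite sin_plus. rewrite (sin_eq_0_1 (IZR n * PI)) by (exists n; auto).
  assert (Hc := sin2_cos2 (IZR n * PI)). rewrite (sin_eq_0_1 (IZR n * PI)) in Hc by (exists n; auto).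
  unfold Rsqr in Hc. ring_simplify. replace (cos (IZR n * PI) ^ 2) with 1 by (simpl; lra). ring.
Qed.

Lemma sin_far (del v : R) : 0 < del -> del <= Rabs v -> Rabs v <= 1/2 -> sin (PI * del) ^ 2 <= sin (PI * v) ^ 2.
Proof.
  intros Hd H1 H2.
  assert (E : sin (PI * v) ^ 2 = sin (PI * Rabs v) ^ 2).
  { destruct (Rle_dec 0 v). rewrite Rabs_right by lra. auto.
    rewrite Rabs_left by lra. replace (PI * - v) with (- (PI * v)) by ring. rewrite sin_neg. ring. }
  rewrite E.
  pose proof PI_RGT_0.
  assert (0 <= sin (PI * del)) by (apply sin_ge_0; nra).
  assert (sin (PI * del) <= sin (PI * Rabs v)) by (apply sin_incr_1; nra).
  nra.
Qed.

Lemma kF_far N t del : 0 < del -> del <= Rabs (t - IZR (nint t)) ->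
  kF N t <= 1 / (INR (S N) * sin (PI * del) ^ 2).
Proof.
  intros Hd Hf. assert (Hs := sin_far del (t - IZR (nint t)) Hd Hf (nint_close t)).
  rewrite <- sin_sq_shift in Hs.
  assert (Hp : 0 < sin (PI * del) ^ 2).
  { pose proof PI_RGT_0. assert (del <= 1/2) by (pose proof (nint_close t); lra).
    assert (0 < sin (PI * del)) by (apply sin_gt_0; nra). nra. }
  assert (HM : 0 < INR (S N)) by (apply lt_0_INR; lia).
  pose proof (fejer_far N t). pose proof (kF_nonneg N t).
  apply Rmult_le_reg_l with (INR (S N) * sin (PI * del) ^ 2). nra.
  replace (INR (S N) * sin (PI * del) ^ 2 * (1 / (INR (S N) * sin (PI * del) ^ 2))) with 1 by (field; nra).
  assert (sin (PI * del) ^ 2 * kF N t <= sin (PI * t) ^ 2 * kF N t) by nra.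
  apply Rmult_le_reg_l with (/ INR (S N)). apply Rinv_0_lt_compat; auto.
  replace (/ INR (S N) * (INR (S N) * sin (PI * del) ^ 2 * kF N t)) with (sin (PI * del) ^ 2 * kF N t) by (field; nra).
  replace (/ INR (S N) * 1) with (1 / INR (S N)) by (field; nra). lra.
Qed.

Lemma bounded_f d f : torus_continuous d f -> exists B, forall y, cube d y -> Rabs (f y) <= B.
Proof.
  intros Hc.
  assert (H : forall n x, exists del, 0 < del /\ exists B, forall y, cube n y ->
            (forall j, (n <= j)%nat -> (j < d)%nat -> Rabs (y j - x j) < del) -> Rabs (f y) <= B).
  { induction n; intros x.
    - destruct (Hc x 1 ltac:(lra)) as [del [Hd H]]. exists del. split; auto. exists (Rabs (f x) + 1).
      intros y _ Hy. assert (Rabs (f y - f x) < 1) by (apply H; intros; apply Hy; lia).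
      pose proof (Rabs_triang_inv (f y) (f x)). lra.
    - set (S := fun u v => exists del, 0 < del /\ exists B, forall y, cube n y -> u <= y n <= v ->
            (forall j, (S n <= j)%nat -> (j < d)%nat -> Rabs (y j - x j) < del) -> Rabs (f y) <= B).
      assert (HS : S (-(1/2)) (1/2)).
      { apply compact_local. lra.
        - intros u v w [d1 [Hd1 [B1 H1]]] [d2 [Hd2 [B2 H2]]]. exists (Rmin d1 d2). split. apply Rmin_pos; auto.
          exists (Rmax B1 B2). intros y Hy Hyn Hj. destruct (Rle_dec (y n) v).
          + eapply Rle_trans. apply H1; auto. lra. intros j Hj1 Hj2. specialize (Hj j Hj1 Hj2). pose proof (Rmin_l d1 d2). lra. apply Rmax_l.
          + eapply Rle_trans. apply H2; auto. lra. intros j Hj1 Hj2. specialize (Hj j Hj1 Hj2). pose proof (Rmin_r d1 d2). lra. apply Rmax_r.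
        - intros t Ht. destruct (IHn (updR x n t)) as [dt [Hdt [Bt Ht']]].
          exists dt. split; auto. intros u v Hu Hv. exists dt. split; auto. exists Bt.
          intros y Hy Hyn Hj. apply Ht'; auto. intros j Hj1 Hj2. unfold updR. destruct (Nat.eqb_spec j n).
          subst. apply Rabs_def1; lra. apply Hj; auto. lia. }
      destruct HS as [del [Hd [B HB]]]. exists del. split; auto. exists B.
      intros y Hy Hj. apply HB. intros j Hj'; apply Hy; lia. apply Hy; lia. intros j Hj1 Hj2; apply Hj; lia. }
  destruct (H d (fun _ => 0)) as [del [Hd [B HB]]]. exists B. intros y Hy. apply HB; auto. intros; lia.
Qed.

Lemma tdist_small t : -(1/2) <= t <= 1/2 -> tdist t = Rabs t.
Proof.
  intros Ht. unfold tdist, frac_part. destruct (base_Int_part t) as [H1 H2].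
  destruct (Rle_dec 0 t).
  - assert (Int_part t = 0%Z).
    { assert (IZR (Int_part t) < 1) by lra. assert (IZR (Int_part t) > -1) by lra.
      apply lt_IZR in H. apply Rlt_gt in H0. apply lt_IZR in H0. lia. }
    rewrite H. simpl. rewrite Rabs_right by lra. unfold Rmin. destruct (Rle_dec (t - 0) (1 - (t - 0))); lra.
  - assert (Int_part t = (-1)%Z).
    { assert (IZR (Int_part t) < 0) by lra. assert (IZR (Int_part t) > -2) by lra.
      apply lt_IZR in H. apply Rlt_gt in H0. apply lt_IZR in H0. lia. }
    rewrite H. rewrite Rabs_left by lra. unfold Rmin. destruct (Rle_dec (t - -1) (1 - (t - -1))); lra.
Qed.

Lemma TC_dot d n m : (n <= d)%nat -> TC d (fun y => dot n y m).
Proof.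
  induction n; intros Hn; simpl. apply TC_const.
  apply TC_plus. apply IHn; lia. apply TC_mult. apply TC_coord; lia. apply TC_const.
Qed.

Lemma TC_cosdot d m phi : TC d (fun y => cos (2 * PI * dot d y m + phi)).
Proof.
  apply (TC_comp d (fun u => cos (2 * PI * u + phi))). intros; apply cont_cosl. apply TC_dot; auto.
Qed.

Lemma TC_kF d N z j : (j < d)%nat -> TC d (fun y => kF N (y j - z j)).
Proof.
  intros Hj. apply (TC_comp d (kF N)). intros; apply cont_kc.
  apply TC_minus. apply TC_coord; auto. apply TC_const.
Qed.

Lemma div_nonneg a b : 0 <= a -> 0 < b -> 0 <= a / b.
Proof. intros. unfold Rdiv. apply Rmult_le_pos; auto. left; apply Rinv_0_lt_compat; auto. Qed.

Definition Kz (d N : nat) (z y : nat -> R) := prodR d (fun j => kF N (y j - z j)).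
Definition Kzj (d N j : nat) (z y : nat -> R) := prodR d (fun i => if Nat.eqb i j then 1 else kF N (y i - z i)).

Lemma TC_Kz d N z : TC d (Kz d N z).
Proof. unfold Kz. apply (TC_prodR d d (fun j y => kF N (y j - z j))). intros; apply TC_kF; auto. Qed.

Lemma TC_Kzj d N j z : TC d (Kzj d N j z).
Proof.
  unfold Kzj. apply (TC_prodR d d (fun i y => if Nat.eqb i j then 1 else kF N (y i - z i))).
  intros i Hi. destruct (Nat.eqb i j). apply TC_const. apply TC_kF; auto.
Qed.

Lemma TC_abs d g : TC d g -> TC d (fun y => Rabs (g y)).
Proof. intros. apply (TC_comp d Rabs); auto. intros; apply Rcontinuity_abs. Qed.

Lemma prodR_nonneg n g : (forall j, (j < n)%nat -> 0 <= g j) -> 0 <= prodR n g.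
Proof. induction n; intros H; simpl. lra. apply Rmult_le_pos. apply IHn; intros; apply H; lia. apply H; lia. Qed.

Lemma prodR_split n g j : (j < n)%nat -> prodR n g = g j * prodR n (fun i => if Nat.eqb i j then 1 else g i).
Proof.
  induction n; intros Hj. lia. simpl. destruct (Nat.eq_dec j n).
  - subst. rewrite Nat.eqb_refl. rewrite (prodR_ext n (fun i => if Nat.eqb i n then 1 else g i) g). ring.
    intros i Hi. destruct (Nat.eqb_spec i n). lia. auto.
  - rewrite IHn by lia. destruct (Nat.eqb_spec n j). lia. ring.
Qed.

Lemma sum_ge_term (g : nat -> R) D j : (forall i, 0 <= g i) -> (j <= D)%nat -> g j <= sum_f_R0 g D.
Proof.
  intros Hg Hj. induction D. replace j with 0%nat by lia. simpl. lra.
  simpl. destruct (Nat.eq_dec j (S D)). subst. pose proof (cond_pos_sum g D Hg). lra.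
  pose proof (Hg (S D)). assert (g j <= sum_f_R0 g D) by (apply IHD; lia). lra.
Qed.

Lemma int_Kz d N z x : integ d (Kz d N z) x = 1.
Proof.
  assert (E := integ_prod d d (fun j t => kF N (t - z j)) (fun _ => 1) x (le_n d)). cbv beta in E.
  transitivity (integ d (fun y => prodR d (fun j => kF N (y j - z j)) * 1) x).
  f_equal. apply functional_extensionality; intros y. unfold Kz. ring.
  rewrite E; auto. rewrite (prodR_ext d _ (fun _ => 1)). 2:{ intros; apply I1_kF. }
  clear. induction d; simpl. ring. rewrite IHd. ring.
  intros j t. apply continuity_pt_comp with (f1 := fun t => t - z j). reg. apply cont_kc.
  apply TC_const.
Qed.

Lemma int_Kzj d N j z x : integ d (Kzj d N j z) x = 1.
Proof.
  assert (E := integ_prod d d (fun i t => if Nat.eqb i j then 1 else kF N (t - z i)) (fun _ => 1) x (le_n d)). cbv beta in E.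
  transitivity (integ d (fun y => prodR d (fun i => if Nat.eqb i j then 1 else kF N (y i - z i)) * 1) x).
  f_equal. apply functional_extensionality; intros y. unfold Kzj. ring.
  rewrite E; auto. rewrite (prodR_ext d _ (fun _ => 1)).
  2:{ intros i _. destruct (Nat.eqb i j). apply I1_const. apply I1_kF. }
  clear. induction d; simpl. ring. rewrite IHd. ring.
  intros i t. destruct (Nat.eqb i j). apply continuity_pt_const; intros ? ?; auto.
  apply continuity_pt_comp with (f1 := fun t => t - z i). reg. apply cont_kc.
  apply TC_const.
Qed.

Lemma Kz_nonneg d N z y : 0 <= Kz d N z y.
Proof. unfold Kz. apply prodR_nonneg. intros; apply kF_nonneg. Qed.

Lemma Kzj_nonneg d N j z y : 0 <= Kzj d N j z y.
Proof. unfold Kzj. apply prodR_nonneg. intros i _. destruct (Nat.eqb i j). lra. apply kF_nonneg. Qed.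

Lemma integ_abs_le d g n x : TC d g -> Rabs (integ n g x) <= integ n (fun y => Rabs (g y)) x.
Proof.
  intros Hg. apply Rabs_le. split.
  - assert (E : integ n (fun y => -1 * Rabs (g y)) x = - integ n (fun y => Rabs (g y)) x).
    { rewrite (integ_scal d); auto. ring. apply TC_abs; auto. }
    rewrite <- E. apply (integ_le d). apply TC_mult. apply TC_const. apply TC_abs; auto. auto.
    intros y _ _. pose proof (Rabs_pos (g y)). pose proof (Rle_abs (- g y)). rewrite Rabs_Ropp in H0. lra.
  - apply (integ_le d); auto. apply TC_abs; auto. intros; apply Rle_abs.
Qed.

Lemma approx_id d f : (1 <= d)%nat -> torus_fun d f -> torus_continuous d f ->
  forall z, cube d z -> forall eps, 0 < eps -> exists N0, forall N, (N0 <= N)%nat ->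
  Rabs (torus_int d (fun y => f y * Kz d N z y) - f z) <= eps.
Proof.
  intros Hd Hf Hc z Hz eps He.
  destruct (bounded_f d f Hc) as [B0 HB0]. set (B := Rmax 0 B0).
  assert (HB : forall y, cube d y -> Rabs (f y) <= B) by (intros; eapply Rle_trans; [apply HB0; auto | apply Rmax_r]).
  assert (HB' : 0 <= B) by apply Rmax_l.
  destruct (Hc z (eps/2) ltac:(lra)) as [d1 [Hd1 Hcz]].
  set (del := Rmin d1 (1/2)).
  assert (Hdel : 0 < del) by (apply Rmin_pos; lra).
  assert (Hdel1 : del <= d1) by apply Rmin_l. assert (Hdel2 : del <= 1/2) by apply Rmin_r.
  set (s2 := sin (PI * del) ^ 2).
  assert (Hs2 : 0 < s2).
  { pose proof PI_RGT_0. assert (0 < sin (PI * del)) by (apply sin_gt_0; nra). unfold s2; nra. }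
  set (Cst := 2 * B * INR d / s2).
  assert (HC : 0 <= Cst) by (unfold Cst; apply div_nonneg; [apply Rmult_le_pos; [lra| apply pos_INR] | lra]).
  destruct (archimed (Cst / (eps / 2))) as [Ha _].
  exists (Z.to_nat (up (Cst / (eps / 2)))). intros N HN.
  set (M := INR (S N)).
  assert (HM : 0 < M) by (apply lt_0_INR; lia).
  assert (HMbig : Cst / M <= eps / 2).
  { assert (Cst / (eps/2) < M).
    { unfold M. apply Rlt_le_trans with (IZR (up (Cst / (eps / 2)))). auto.
      destruct (Z_le_gt_dec 0 (up (Cst / (eps / 2)))).
      - rewrite <- (Z2Nat.id (up (Cst / (eps / 2)))) by auto. rewrite <- INR_IZR_INZ. apply le_INR. lia.
      - apply Rle_trans with 0. apply IZR_le; lia. apply pos_INR. }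
    apply Rmult_le_reg_r with M; auto. unfold Rdiv at 1. rewrite Rmult_assoc, Rinv_l, Rmult_1_r by lra.
    apply Rmult_le_reg_r with (/ (eps/2)). apply Rinv_0_lt_compat; lra.
    replace (eps / 2 * M * / (eps / 2)) with M by (field; lra). unfold Rdiv in H. lra. }
  set (g := fun y => (f y - f z) * Kz d N z y).
  assert (Tg : TC d g). { unfold g. apply TC_mult. apply TC_minus; auto. apply TC_const. apply TC_Kz. }
  assert (E1 : torus_int d (fun y => f y * Kz d N z y) - f z = integ d g (fun _ => 0)).
  { unfold torus_int.
    assert (L := integ_lin d (fun y => f y * Kz d N z y) (Kz d N z) d ltac:(apply TC_mult; auto; apply TC_Kz) (TC_Kz d N z) (fun _ => 0) 1 (- f z)).
    rewrite int_Kz in L.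
    transitivity (integ d (fun y => 1 * (f y * Kz d N z y) + (- f z) * Kz d N z y) (fun _ => 0)).
    rewrite L. ring.
    f_equal. apply functional_extensionality; intros y. unfold g. ring. }
  rewrite E1. eapply Rle_trans. apply (integ_abs_le d); auto.
  set (Sj := fun y => sum_f_R0 (fun j => Kzj d N j z y) (pred d)).
  assert (TSj : TC d Sj). { unfold Sj. apply (TC_sum d (fun j y => Kzj d N j z y)). intros; apply TC_Kzj. }
  assert (Hpt : forall y, cube d y -> Rabs (g y) <= (eps/2) * Kz d N z y + (2 * B / (M * s2)) * Sj y).
  { intros y Hy. unfold g. rewrite Rabs_mult, (Rabs_right (Kz d N z y)) by (apply Rle_ge, Kz_nonneg).
    assert (HSj : 0 <= Sj y) by (unfold Sj; apply cond_pos_sum; intros; apply Kzj_nonneg).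
    assert (Hco : 0 <= 2 * B / (M * s2)) by (apply div_nonneg; nra).
    assert (HK := Kz_nonneg d N z y).
    destruct (classic (exists j, (j < d)%nat /\ del <= Rabs ((y j - z j) - IZR (nint (y j - z j))))) as [[j [Hj Hfar]]|Hnear].
    - assert (Hk := kF_far N (y j - z j) del Hdel Hfar). fold s2 in Hk. fold M in Hk.
      assert (Hsplit := prodR_split d (fun j => kF N (y j - z j)) j Hj). fold (Kz d N z y) in Hsplit.
      assert (Hkj := Kzj_nonneg d N j z y). unfold Kzj in Hkj.
      assert (Hterm : Kzj d N j z y <= Sj y).
      { unfold Sj. apply (sum_ge_term (fun j => Kzj d N j z y)). intros; apply Kzj_nonneg. lia. }
      assert (Hdiff : Rabs (f y - f z) <= 2 * B).
      { pose proof (HB y Hy). pose proof (HB z Hz). pose proof (Rabs_triang (f y) (- f z)). rewrite Rabs_Ropp in H1. unfold Rminus. lra. }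
      cbv beta in Hsplit. rewrite Hsplit. unfold Kzj in Hterm.
      assert (Hk0 := kF_nonneg N (y j - z j)).
      set (a := Rabs (f y - f z)) in *. set (b := kF N (y j - z j)) in *.
      set (c := prodR d (fun i => if Nat.eqb i j then 1 else kF N (y i - z i))) in *.
      assert (Ha0 : 0 <= a) by apply Rabs_pos.
      assert (S1 : a * (b * c) <= 2 * B * (b * c)) by (apply Rmult_le_compat_r; [apply Rmult_le_pos|]; auto).
      assert (S2 : 2 * B * (b * c) <= 2 * B * (1 / (M * s2) * c)).
      { apply Rmult_le_compat_l. lra. apply Rmult_le_compat_r; auto. }
      assert (S3 : 2 * B * (1 / (M * s2) * c) <= 2 * B / (M * s2) * Sj y).
      { replace (2 * B * (1 / (M * s2) * c)) with (2 * B / (M * s2) * c) by (field; nra).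
        apply Rmult_le_compat_l; auto. }
      assert (0 <= eps / 2 * (b * c)) by (apply Rmult_le_pos; [lra | apply Rmult_le_pos; auto]).
      lra.
    - assert (Hall : forall j, (j < d)%nat -> Rabs ((y j - z j) - IZR (nint (y j - z j))) < del).
      { intros j Hj. destruct (Rlt_le_dec (Rabs ((y j - z j) - IZR (nint (y j - z j)))) del); auto.
        exfalso. apply Hnear. exists j. auto. }
      set (w := fun j => y j + IZR (- nint (y j - z j))).
      assert (Efw : f w = f y) by (apply (shift_vec d f Hf y (fun j => (- nint (y j - z j))%Z))).
      assert (Hwz : Rabs (f w - f z) < eps / 2).
      { apply Hcz. intros j Hj. unfold w. rewrite opp_IZR. specialize (Hall j Hj).
        replace (y j + - IZR (nint (y j - z j)) - z j) with (y j - z j - IZR (nint (y j - z j))) by ring. lra. }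
      rewrite Efw in Hwz.
      assert (Rabs (f y - f z) * Kz d N z y <= eps / 2 * Kz d N z y) by (apply Rmult_le_compat_r; lra).
      assert (0 <= 2 * B / (M * s2) * Sj y) by (apply Rmult_le_pos; auto).
      lra. }
  eapply Rle_trans. apply (integ_le d) with (g2 := fun y => (eps/2) * Kz d N z y + (2 * B / (M * s2)) * Sj y).
  apply TC_abs; auto. apply TC_plus; apply TC_mult; try apply TC_const; auto. apply TC_Kz.
  intros y Hy _. apply Hpt; auto.
  rewrite (integ_lin d); auto. 2: apply TC_Kz.
  rewrite int_Kz. unfold Sj. rewrite (integ_sum d). rewrite (sum_eq _ (fun _ => 1)).
  2:{ intros; apply int_Kzj. }
  rewrite sum_cte. replace (S (pred d)) with d by lia.
  assert (2 * B / (M * s2) * (1 * INR d) = Cst / M) by (unfold Cst; field; nra).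
  lra. intros; apply TC_Kzj.
Qed.

Lemma dot_minus n y z m : dot n (fun j => y j - z j) m = dot n y m - dot n z m.
Proof. induction n; simpl. ring. rewrite IHn. ring. Qed.

Lemma dot_plusopp n y x m : dot n (fun j => y j - - x j) m = dot n y m + dot n x m.
Proof. induction n; simpl. ring. rewrite IHn. ring. Qed.

Lemma dot_zero_x n m : dot n (fun _ => 0) m = 0.
Proof. induction n; simpl. ring. rewrite IHn. ring. Qed.

Lemma dot_zero_m n x : dot n x (fun _ => 0%Z) = 0.
Proof. induction n; simpl. ring. rewrite IHn. ring. Qed.

Lemma TC_boxsum d n N (G : (nat -> R) -> (nat -> Z) -> R) :
  (forall m, TC d (fun y => G y m)) -> forall m0, TC d (fun y => boxsum n N (G y) m0).
Proof.
  intros HG. induction n; intros m0; simpl. apply HG.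
  apply (TC_sum d (fun i y => boxsum n N (G y) (updZ m0 n (Z.of_nat i - Z.of_nat N)))). intros; apply IHn.
Qed.

Lemma integ_boxsum d n' n N (G : (nat -> R) -> (nat -> Z) -> R) x :
  (forall m, TC d (fun y => G y m)) -> forall m0,
  integ n' (fun y => boxsum n N (G y) m0) x = boxsum n N (fun m => integ n' (fun y => G y m) x) m0.
Proof.
  intros HG. induction n; intros m0. reflexivity.
  simpl. rewrite (integ_sum d n' (fun i y => boxsum n N (G y) (updZ m0 n (Z.of_nat i - Z.of_nat N)))).
  apply sum_eq. intros; apply IHn. intros; apply TC_boxsum; auto.
Qed.

Lemma Kz_box d N z y : Kz d N z y =
  boxsum d N (fun m => prodZ (cF N) d m * cos (2 * PI * dot d (fun j => y j - z j) m)) (fun _ => 0%Z).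
Proof.
  destruct (box_kernel (cF N) N (fun j => y j - z j) (cF_even N) d (fun _ => 0%Z)) as [E _].
  rewrite E. reflexivity.
Qed.

Definition Abar d N (f : (nat -> R) -> R) x :=
  torus_int d (fun y => f y * ((Kz d N x y + Kz d N (fun j => - x j) y) / 2)).

Lemma TC_cosdot0 d m : TC d (fun y => cos (2 * PI * dot d y m)).
Proof.
  apply (TC_comp d (fun u => cos (2 * PI * u))). intros t.
  apply continuity_pt_comp with (f1 := fun u => 2 * PI * u). reg. apply continuity_cos.
  apply TC_dot; auto.
Qed.

Lemma Abar_fourier d N f x : TC d f ->
  Abar d N f x = boxsum d N (fun m => prodZ (cF N) d m * cos (2 * PI * dot d x m) * fhat_re d f m) (fun _ => 0%Z).
Proof.
  intros Hf. unfold Abar, fhat_re, torus_int.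
  transitivity (integ d (fun y => boxsum d N (fun m => (prodZ (cF N) d m * cos (2 * PI * dot d x m)) * (f y * cos (2 * PI * dot d y m))) (fun _ => 0%Z)) (fun _ => 0)).
  - f_equal. apply functional_extensionality; intros y.
    rewrite !Kz_box.
    rewrite <- (Rmult_1_r (f y)) at 1.
    transitivity (f y * (1/2 * boxsum d N (fun m => prodZ (cF N) d m * cos (2 * PI * dot d (fun j => y j - x j) m)) (fun _ => 0%Z)
      + 1/2 * boxsum d N (fun m => prodZ (cF N) d m * cos (2 * PI * dot d (fun j => y j - - x j) m)) (fun _ => 0%Z))).
    field. rewrite <- boxsum_lin.
    transitivity (f y * boxsum d N (fun m => prodZ (cF N) d m * cos (2 * PI * dot d x m) * cos (2 * PI * dot d y m)) (fun _ => 0%Z)).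
    f_equal. f_equal. apply functional_extensionality; intros m.
    rewrite dot_minus, dot_plusopp.
    replace (2 * PI * (dot d y m - dot d x m)) with (2 * PI * dot d y m - 2 * PI * dot d x m) by ring.
    replace (2 * PI * (dot d y m + dot d x m)) with (2 * PI * dot d y m + 2 * PI * dot d x m) by ring.
    rewrite cos_minus, cos_plus. field.
    transitivity (f y * boxsum d N (fun m => prodZ (cF N) d m * cos (2 * PI * dot d x m) * cos (2 * PI * dot d y m)) (fun _ => 0%Z) + 0 * boxsum d N (fun m => 0) (fun _ => 0%Z)).
    ring. rewrite <- boxsum_lin. f_equal. apply functional_extensionality; intros m. ring.
  - rewrite (integ_boxsum d). f_equal. apply functional_extensionality; intros m.
    rewrite (integ_scal d). ring. apply TC_mult; auto. apply TC_cosdot0.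
    intros m. apply TC_mult. apply TC_const. apply TC_mult; auto. apply TC_cosdot0.
Qed.

Lemma prodR_01 n g : (forall j, 0 <= g j <= 1) -> 0 <= prodR n g <= 1.
Proof.
  intros H. induction n; simpl. lra. destruct IHn. destruct (H n). split. apply Rmult_le_pos; auto.
  replace 1 with (1 * 1) by ring. apply Rmult_le_compat; lra.
Qed.

Lemma fhat_bound d f m : TC d f -> Rabs (fhat_re d f m) <= torus_int d (fun y => Rabs (f y)).
Proof.
  intros Hf. unfold fhat_re, torus_int. eapply Rle_trans. apply (integ_abs_le d).
  apply TC_mult; auto. apply TC_cosdot0.
  apply (integ_le d). apply TC_abs, TC_mult; auto. apply TC_cosdot0. apply TC_abs; auto.
  intros y _ _. rewrite Rabs_mult. pose proof (COS_bound (2 * PI * dot d y m)). pose proof (Rabs_pos (f y)).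
  assert (Rabs (cos (2 * PI * dot d y m)) <= 1) by (apply Rabs_le; lra). nra.
Qed.

Definition indk (k : nat) (v : Z) : R := if Z.ltb (Z.abs v) (Z.of_nat k) then 1 else 0.

Lemma indk_even k v : indk k (- v) = indk k v.
Proof. unfold indk. rewrite Z.abs_opp. auto. Qed.

Lemma prodR_const n a : prodR n (fun _ => a) = a ^ n.
Proof. induction n; simpl. auto. rewrite IHn. ring. Qed.

Lemma count_low N k : (k <= S N)%nat -> sum_f_R0 (fun n => if Nat.ltb n k then 1 else 0) N = INR k.
Proof.
  intros Hk. assert (H : forall N, sum_f_R0 (fun n => if Nat.ltb n k then 1 else 0) N = INR (Nat.min k (S N))).
  { clear Hk N. intros N0. induction N0.
    - simpl. destruct k; simpl. auto. destruct k; simpl; auto.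
    - simpl sum_f_R0. rewrite IHN0. destruct (Nat.ltb_spec (S N0) k).
      + replace (Nat.min k (S N0)) with (S N0) by lia. replace (Nat.min k (S (S N0))) with (S (S N0)) by lia.
        rewrite (S_INR (S N0)). ring.
      + replace (Nat.min k (S (S N0))) with (Nat.min k (S N0)) by lia. ring. }
  rewrite H. f_equal. lia.
Qed.

Lemma kc_indk N k : (1 <= k)%nat -> (k <= S N)%nat -> kc (indk k) N 0 = 2 * INR k - 1.
Proof.
  intros Hk1 Hk. unfold kc.
  rewrite (sum_eq _ (fun i => indk k (zi N i))).
  2:{ intros; rewrite Rmult_0_l, Rmult_0_r, cos_0. ring. }
  rewrite (symsum (indk k)).
  rewrite (sum_eq _ (fun n => 2 * (if Nat.ltb n k then 1 else 0) + 0 * 0)).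
  rewrite sum_lin2. rewrite count_low by auto. unfold indk. simpl.
  destruct (Z.ltb_spec 0 (Z.of_nat k)). ring. lia.
  intros i _. rewrite indk_even. unfold indk. rewrite (Z.abs_eq (Z.of_nat i)) by lia.
  destruct (Nat.ltb_spec i k); destruct (Z.ltb_spec (Z.of_nat i) (Z.of_nat k)); try lia; ring.
Qed.

Lemma box_low d N k : (1 <= k)%nat -> (k <= S N)%nat ->
  boxsum d N (fun m => prodZ (indk k) d m) (fun _ => 0%Z) = (2 * INR k - 1) ^ d.
Proof.
  intros Hk1 Hk.
  destruct (box_kernel (indk k) N (fun _ => 0) (indk_even k) d (fun _ => 0%Z)) as [E _].
  rewrite (functional_extensionality (fun m => prodZ (indk k) d m) (fun m => prodZ (indk k) d m * cos (2 * PI * dot d (fun _ => 0) m))).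
  rewrite E. rewrite (prodR_ext d _ (fun _ => 2 * INR k - 1)). apply prodR_const.
  intros; apply kc_indk; auto.
  intros m. rewrite dot_zero_x, Rmult_0_r, cos_0. ring.
Qed.

Lemma prodZ_indk_low d k m : ~ maxabs_ge d m k -> prodZ (indk k) d m = 1.
Proof.
  intros H. unfold prodZ. rewrite (prodR_ext d _ (fun _ => 1)). rewrite prodR_const. apply pow1.
  intros j Hj. unfold indk. destruct (Z.ltb_spec (Z.abs (m j)) (Z.of_nat k)). auto.
  exfalso. apply H. exists j. split; auto. lia.
Qed.

Lemma prodZ_indk_nonneg d k m : 0 <= prodZ (indk k) d m.
Proof. unfold prodZ. apply prodR_nonneg. intros. unfold indk. destruct (Z.ltb _ _); lra. Qed.

Lemma main_ineq d N f k s x : TC d f -> (s = 1 \/ s = -1) -> (1 <= k)%nat -> (k <= S N)%nat ->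
  (forall m, maxabs_ge d m k -> s * fhat_re d f m >= 0) ->
  Abar d N f x >= - s * Abar d N f (fun _ => 0) - 2 * torus_int d (fun y => Rabs (f y)) * (2 * INR k - 1) ^ d.
Proof.
  intros Hf Hs Hk1 Hk Hhigh.
  set (I := torus_int d (fun y => Rabs (f y))).
  rewrite !Abar_fourier by auto.
  rewrite <- (box_low d N k) by auto.
  apply Rle_ge.
  replace (- s * boxsum d N (fun m => prodZ (cF N) d m * cos (2 * PI * dot d (fun _ => 0) m) * fhat_re d f m) (fun _ => 0%Z) -
     2 * I * boxsum d N (fun m => prodZ (indk k) d m) (fun _ => 0%Z))
   with (boxsum d N (fun m => (- s) * (prodZ (cF N) d m * cos (2 * PI * dot d (fun _ => 0) m) * fhat_re d f m) + (- (2 * I)) * prodZ (indk k) d m) (fun _ => 0%Z)).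
  2:{ rewrite boxsum_lin. change (fun m => prodZ (indk k) d m) with (prodZ (indk k) d). ring. }
  apply boxsum_le. intros m.
  rewrite dot_zero_x, Rmult_0_r, cos_0, Rmult_1_r.
  set (C := prodZ (cF N) d m). set (fh := fhat_re d f m).
  assert (HC : 0 <= C <= 1) by (apply prodR_01; intros; apply cF_bounds).
  assert (Hfh : Rabs fh <= I) by (apply fhat_bound; auto).
  assert (Hcos := COS_bound (2 * PI * dot d x m)).
  assert (HL := prodZ_indk_nonneg d k m).
  assert (Hterm : - (C * Rabs fh) <= C * cos (2 * PI * dot d x m) * fh).
  { assert (Rabs (C * cos (2 * PI * dot d x m) * fh) <= C * Rabs fh).
    { rewrite !Rabs_mult. rewrite (Rabs_right C) by lra. assert (Rabs (cos (2 * PI * dot d x m)) <= 1) by (apply Rabs_le; lra).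
      pose proof (Rabs_pos (cos (2 * PI * dot d x m))). pose proof (Rabs_pos fh).
      replace (C * Rabs fh) with (C * 1 * Rabs fh) by ring.
      apply Rmult_le_compat_r; auto. apply Rmult_le_compat_l; lra. }
    pose proof (Rle_abs (- (C * cos (2 * PI * dot d x m) * fh))). rewrite Rabs_Ropp in H0. lra. }
  assert (HsF : - s * (C * fh) <= C * Rabs fh).
  { destruct Hs as [-> | ->].
    - pose proof (Rle_abs (- fh)). rewrite Rabs_Ropp in H. nra.
    - pose proof (Rle_abs fh). nra. }
  destruct (classic (maxabs_ge d m k)) as [Hh|Hl].
  - specialize (Hhigh m Hh). fold fh in Hhigh.
    assert (E : Rabs fh = s * fh).
    { destruct Hs as [-> | ->]. rewrite Rabs_right; lra. rewrite Rabs_left1; lra. }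
    assert (0 <= I) by (pose proof (Rabs_pos fh); lra).
    rewrite E in Hterm. nra.
  - rewrite prodZ_indk_low by auto.
    assert (C * Rabs fh <= I) by (pose proof (Rabs_pos fh); nra).
    lra.
Qed.

Lemma Abar_lim d f : (1 <= d)%nat -> torus_fun d f -> torus_continuous d f -> even_fun f ->
  forall x, cube d x -> forall eps, 0 < eps -> exists N0, forall N, (N0 <= N)%nat ->
  Rabs (Abar d N f x - f x) <= eps.
Proof.
  intros Hd Hf Hc He x Hx eps Heps.
  assert (Hx' : cube d (fun j => - x j)) by (intros j Hj; specialize (Hx j Hj); lra).
  destruct (approx_id d f Hd Hf Hc x Hx eps Heps) as [N1 H1].
  destruct (approx_id d f Hd Hf Hc (fun j => - x j) Hx' eps Heps) as [N2 H2].
  exists (Nat.max N1 N2). intros N HN.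
  specialize (H1 N ltac:(lia)). specialize (H2 N ltac:(lia)). rewrite He in H2.
  unfold Abar, torus_int in *.
  rewrite (functional_extensionality (fun y => f y * ((Kz d N x y + Kz d N (fun j => - x j) y) / 2))
     (fun y => 1/2 * (f y * Kz d N x y) + 1/2 * (f y * Kz d N (fun j => - x j) y))) by (intros; field).
  rewrite (integ_lin d). 2,3: apply TC_mult; auto; apply TC_Kz.
  set (a := integ d (fun y => f y * Kz d N x y) (fun _ => 0)) in *.
  set (b := integ d (fun y => f y * Kz d N (fun j => - x j) y) (fun _ => 0)) in *.
  replace (1/2 * a + 1/2 * b - f x) with (1/2 * (a - f x) + 1/2 * (b - f x)) by field.
  eapply Rle_trans. apply Rabs_triang. rewrite !Rabs_mult. rewrite (Rabs_right (1/2)) by lra. lra.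
Qed.

Lemma f_lower d f s k : (1 <= d)%nat -> torus_fun d f -> torus_continuous d f -> even_fun f ->
  (s = 1 \/ s = -1) -> (1 <= k)%nat ->
  (forall m, maxabs_ge d m k -> s * fhat_re d f m >= 0) -> s * f (fun _ => 0) <= 0 ->
  forall x, cube d x -> f x >= - (2 * torus_int d (fun y => Rabs (f y)) * (2 * INR k - 1) ^ d).
Proof.
  intros Hd Hf Hc He Hs Hk Hhigh Hs0 x Hx.
  set (Q := 2 * torus_int d (fun y => Rabs (f y)) * (2 * INR k - 1) ^ d).
  apply Rnot_lt_ge. intros Hlt. fold Q in Hlt.
  set (eps := (- Q - f x) / 4).
  assert (Heps : 0 < eps) by (unfold eps; lra).
  assert (H0 : cube d (fun _ => 0)) by (intros j _; lra).
  destruct (Abar_lim d f Hd Hf Hc He x Hx eps Heps) as [N1 H1].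
  destruct (Abar_lim d f Hd Hf Hc He (fun _ => 0) H0 eps Heps) as [N2 H2].
  set (N := Nat.max k (Nat.max N1 N2)).
  specialize (H1 N ltac:(unfold N; lia)). specialize (H2 N ltac:(unfold N; lia)).
  assert (HM := main_ineq d N f k s x Hc Hs Hk ltac:(unfold N; lia) Hhigh).
  fold Q in HM.
  apply Rabs_le_between in H1. apply Rabs_le_between in H2.
  assert (- s * Abar d N f (fun _ => 0) >= - eps).
  { destruct Hs as [-> | ->]; lra. }
  unfold eps in *. lra.
Qed.

Definition clamp (u : R) := (Rabs u - Rabs (u - 1) + 1) / 2.

Lemma clamp_props u : 0 <= clamp u <= 1 /\ (u <= 0 -> clamp u = 0) /\ (1 <= u -> clamp u = 1).
Proof.
  unfold clamp. unfold Rabs. destruct (Rcase_abs u); destruct (Rcase_abs (u - 1)); repeat split; intros; lra.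
Qed.

Lemma clamp_lip u v : Rabs (clamp u - clamp v) <= Rabs (u - v).
Proof.
  unfold clamp. pose proof (Rabs_triang_inv2 u v). pose proof (Rabs_triang_inv2 (u - 1) (v - 1)).
  replace ((u - 1) - (v - 1)) with (u - v) in H0 by ring.
  replace ((Rabs u - Rabs (u - 1) + 1) / 2 - (Rabs v - Rabs (v - 1) + 1) / 2) with
    ((Rabs u - Rabs v) / 2 - (Rabs (u - 1) - Rabs (v - 1)) / 2) by field.
  eapply Rle_trans. apply Rabs_triang. rewrite Rabs_Ropp. unfold Rdiv. rewrite !Rabs_mult.
  rewrite (Rabs_right (/ 2)) by lra. lra.
Qed.

Definition psi (a e t : R) := clamp ((a - Rabs t) / e).

Lemma psi_cont a e t : 0 < e -> continuity_pt (psi a e) t.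
Proof.
  intros He. apply eps_cpt. intros eps Heps. exists (eps * e). split. nra.
  intros u Hu. unfold psi. eapply Rle_lt_trans. apply clamp_lip.
  replace ((a - Rabs u) / e - (a - Rabs t) / e) with ((Rabs t - Rabs u) / e) by (field; lra).
  unfold Rdiv. rewrite Rabs_mult, (Rabs_right (/ e)) by (left; apply Rinv_0_lt_compat; auto).
  pose proof (Rabs_triang_inv2 t u). rewrite (Rabs_minus_sym t u) in H.
  apply Rmult_lt_reg_r with e; auto. rewrite Rmult_assoc, Rinv_l, Rmult_1_r by lra. lra.
Qed.

Lemma I1_psi a e : 0 < e -> 0 < a -> I1 (psi a e) <= 2 * a.
Proof.
  intros He Ha. destruct (Rle_dec (1/2) a).
  - eapply Rle_trans. apply I1_le with (h2 := fun _ => 1). intros; apply psi_cont; auto.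
    intros; apply continuity_pt_const; intros ? ?; auto.
    intros t _. apply clamp_props. rewrite I1_const. lra.
  - rewrite I1_RInt by (intros; apply psi_cont; auto).
    assert (Ex : forall u v, ex_RInt (psi a e) u v) by (intros; apply cont_exRInt; intros; apply psi_cont; auto).
    assert (Z1 : RInt (psi a e) (-(1/2)) (-a) = 0).
    { rewrite (RInt_ext _ (fun _ => 0)). rewrite RInt_const. unfold scal; simpl; unfold mult; simpl. ring.
      intros t Ht. rewrite Rmin_left in Ht by lra. rewrite Rmax_right in Ht by lra.
      unfold psi. apply clamp_props. rewrite Rabs_left by lra. apply Rmult_le_reg_r with e; auto.
      unfold Rdiv. rewrite Rmult_assoc, Rinv_l by lra. lra. }
    assert (Z2 : RInt (psi a e) a (1/2) = 0).
    { rewrite (RInt_ext _ (fun _ => 0)). rewrite RInt_const. unfold scal; simpl; unfold mult; simpl. ring.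
      intros t Ht. rewrite Rmin_left in Ht by lra. rewrite Rmax_right in Ht by lra.
      unfold psi. apply clamp_props. rewrite Rabs_right by lra. apply Rmult_le_reg_r with e; auto.
      unfold Rdiv. rewrite Rmult_assoc, Rinv_l by lra. lra. }
    assert (M : RInt (psi a e) (-a) a <= 2 * a).
    { eapply Rle_trans. apply RInt_le with (g := fun _ => 1). lra. auto.
      apply cont_exRInt; intros; apply continuity_pt_const; intros ? ?; auto.
      intros t _. apply clamp_props. rewrite RInt_const. unfold scal; simpl; unfold mult; simpl. lra. }
    rewrite <- (RInt_Chasles (V:=R_CompleteNormedModule) (psi a e) (-(1/2)) (-a) (1/2)); auto.
    rewrite <- (RInt_Chasles (V:=R_CompleteNormedModule) (psi a e) (-a) a (1/2)); auto.
    change (plus (RInt (psi a e) (-(1/2)) (-a)) (plus (RInt (psi a e) (-a) a) (RInt (psi a e) a (1/2))) <= 2 * a).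
    rewrite Z1, Z2. unfold plus; simpl. lra.
Qed.

Lemma I1_psi_nonneg a e : 0 < e -> 0 <= I1 (psi a e).
Proof.
  intros He. rewrite <- (I1_const 0). apply I1_le. intros; apply continuity_pt_const; intros ? ?; auto.
  intros; apply psi_cont; auto. intros t _. apply clamp_props.
Qed.

Lemma pow_lt_base a b n : 0 <= a -> a < b -> (1 <= n)%nat -> a ^ n < b ^ n.
Proof.
  intros Ha Hab Hn. induction n. lia. destruct n. simpl; lra.
  simpl in *. assert (0 <= a * a ^ n) by (apply Rmult_le_pos; auto; apply pow_le; auto).
  specialize (IHn ltac:(lia)). apply Rmult_le_0_lt_compat; auto.
Qed.

Lemma rp_key (u : R) (d : nat) : (1 <= d)%nat -> 0 < u -> 1 <= 4 * u ^ d -> Rpower 2 (- (2 / INR d)) <= u.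
Proof.
  intros Hd Hu H. apply Rnot_lt_le. intros Hlt.
  set (q := Rpower 2 (- (2 / INR d))) in *.
  assert (Hq : 0 < q) by (unfold q, Rpower; apply exp_pos).
  assert (E : q ^ d = / 4).
  { rewrite <- Rpower_pow by auto. unfold q. rewrite Rpower_mult.
    replace (- (2 / INR d) * INR d) with (- INR 2).
    rewrite Rpower_Ropp, Rpower_pow by lra. simpl. field.
    simpl. field. apply not_0_INR. lia. }
  assert (u ^ d < q ^ d) by (apply pow_lt_base; [lra|lra|auto]).
  lra.
Qed.

Lemma abs0 x : Rabs x <= 0 -> x = 0.
Proof. unfold Rabs. destruct (Rcase_abs x); lra. Qed.

Lemma boxsum_zero n N m0 : boxsum n N (fun _ => 0) m0 = 0.
Proof. revert m0; induction n; intros m0; simpl. auto. rewrite (sum_eq _ (fun _ => 0)). rewrite sum_cte. ring. intros; apply IHn. Qed.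

Theorem mainTheorem13 (s : R) (d : nat) (f : (nat -> R) -> R) (r : R) (k : nat) :
  (s = 1 \/ s = -1) ->
  (1 <= d)%nat ->
  torus_fun d f ->
  torus_continuous d f ->
  even_fun f ->
  (exists x, f x <> 0) ->
  fhat_l1 d f ->
  0 < r -> r <= 1 ->
  (1 <= k)%nat ->
  (forall x, dinf0_ge d x r -> f x >= 0) ->
  (fhat_im d f (fun _ => 0%Z) = 0 /\ fhat_re d f (fun _ => 0%Z) <= 0) ->
  (forall m, maxabs_ge d m k -> fhat_im d f m = 0 /\ s * fhat_re d f m >= 0) ->
  s * f (fun _ => 0) <= 0 ->
  r * (2 * INR k - 1) >= Rpower 2 (- (1 + 4 / INR d)).
Proof.
  intros Hs Hd Hf Hc He Hnz _ Hr0 Hr1 Hk Hpos [_ Hre0] Hhigh Hs0.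
  assert (Hhigh' : forall m, maxabs_ge d m k -> s * fhat_re d f m >= 0) by (intros m Hm; apply Hhigh; auto).
  set (I := torus_int d (fun y => Rabs (f y))).
  set (P := (2 * INR k - 1) ^ d).
  assert (HkR : 1 <= INR k) by (apply (le_INR 1 k) in Hk; simpl in Hk; lra).
  assert (HP : 1 <= P) by (unfold P; apply pow_R1_Rle; lra).
  assert (Hlow : forall x, cube d x -> f x >= - (2 * I * P)) by (intros; apply (f_lower d f s k); auto).
  assert (TCabs : TC d (fun y => Rabs (f y))) by (apply TC_abs; auto).
  assert (HI0 : 0 <= I).
  { unfold I, torus_int.
    assert (H := integ_le d (fun _ => 0) (fun y => Rabs (f y)) d (TC_const d 0) TCabs (fun _ => 0) ltac:(intros; apply Rabs_pos)).
    rewrite integ_const in H. exact H. }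
  destruct (Req_dec I 0) as [HI|HI].
  - (* I = 0 implies f = 0 *)
    exfalso.
    assert (Hcube : forall x, cube d x -> f x = 0).
    { intros x Hx. apply abs0.
      apply Rnot_lt_le. intros Hlt.
      destruct (Abar_lim d f Hd Hf Hc He x Hx (Rabs (f x) / 2) ltac:(lra)) as [N0 HN0].
      specialize (HN0 N0 (le_n _)).
      rewrite Abar_fourier in HN0 by auto.
      rewrite (functional_extensionality (fun m => prodZ (cF N0) d m * cos (2 * PI * dot d x m) * fhat_re d f m) (fun _ => 0)) in HN0.
      rewrite boxsum_zero in HN0. rewrite Rminus_0_l, Rabs_Ropp in HN0. lra.
      intros m. assert (Hb := fhat_bound d f m Hc). fold I in Hb. rewrite HI in Hb.
      assert (fhat_re d f m = 0) by (apply abs0; lra).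
      rewrite H. ring. }
    destruct Hnz as [x Hx]. apply Hx.
    rewrite <- (shift_vec d f Hf x (fun j => (- nint (x j))%Z)).
    apply Hcube. intros j Hj. rewrite opp_IZR. pose proof (nint_close (x j)). apply Rabs_le_between in H. lra.
  - assert (HIp : 0 < I) by lra.
    assert (Hkey : forall e, 0 < e -> 1 <= 4 * (2 * (r + e) * (2 * INR k - 1)) ^ d).
    { intros e He0. set (a := r + e).
      set (fneg := fun y => (Rabs (f y) - f y) * / 2).
      assert (Tfn : TC d fneg) by (unfold fneg; apply TC_mult; [apply TC_minus; auto | apply TC_const]).
      assert (E1 : I = torus_int d f + 2 * torus_int d fneg).
      { unfold I, torus_int.
        transitivity (integ d (fun y => 1 * f y + 2 * fneg y) (fun _ => 0)).
        f_equal. apply functional_extensionality; intros y. unfold fneg. field.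
        rewrite (integ_lin d f fneg d Hc Tfn (fun _ => 0) 1 2). ring. }
      assert (E2 : torus_int d f = fhat_re d f (fun _ => 0%Z)).
      { unfold fhat_re. f_equal. apply functional_extensionality; intros y. rewrite dot_zero_m, Rmult_0_r, cos_0. ring. }
      assert (Hpsi_c : forall j t, continuity_pt ((fun _ : nat => psi a e) j) t) by (intros; apply psi_cont; auto).
      assert (Tphi : TC d (fun y => prodR d (fun j => psi a e (y j)))).
      { apply (TC_prodR d d (fun j y => psi a e (y j))). intros j Hj. apply (TC_comp d (psi a e)).
        intros; apply psi_cont; auto. apply TC_coord; auto. }
      assert (Hphi0 : forall y, 0 <= prodR d (fun j => psi a e (y j))).
      { intros y. apply prodR_nonneg. intros; apply clamp_props. }
      assert (E3 : torus_int d fneg <= 2 * I * P * (I1 (psi a e)) ^ d).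
      { unfold torus_int.
        eapply Rle_trans. apply (integ_le d) with (g2 := fun y => (2 * I * P) * prodR d (fun j => psi a e (y j))).
        auto. apply TC_mult; auto. apply TC_const.
        - intros y Hy _. unfold fneg. destruct (Rle_dec 0 (f y)).
          + rewrite Rabs_right by lra. replace ((f y - f y) * / 2) with 0 by ring.
            apply Rmult_le_pos; auto. apply Rmult_le_pos; lra.
          + assert (Hall : forall j, (j < d)%nat -> psi a e (y j) = 1).
            { intros j Hj. destruct (Rlt_le_dec (tdist (y j)) r) as [Hlt|Hge].
              - rewrite tdist_small in Hlt by (apply Hy; auto). unfold psi. apply clamp_props.
                apply Rmult_le_reg_r with e; auto. unfold Rdiv. rewrite Rmult_assoc, Rinv_l by lra. unfold a. lra.
              - exfalso. assert (f y >= 0) by (apply Hpos; exists j; split; auto; lra). lra. }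
            rewrite (prodR_ext d _ (fun _ => 1)) by auto. rewrite prodR_const, pow1.
            rewrite Rabs_left by lra. specialize (Hlow y Hy). lra.
        - rewrite (integ_scal d) by auto.
          assert (Ep := integ_prod d d (fun _ => psi a e) (fun _ => 1) (fun _ => 0) (le_n d) Hpsi_c (TC_const d 1) (fun _ _ _ => eq_refl)).
          cbv beta in Ep. rewrite (functional_extensionality (fun y => prodR d (fun j => psi a e (y j)) * 1) (fun y => prodR d (fun j => psi a e (y j)))) in Ep by (intros; ring).
          rewrite Ep, prodR_const. right; ring. }
      assert (Hpsi := I1_psi a e He0 ltac:(unfold a; lra)).
      assert (Hpsi0 := I1_psi_nonneg a e He0).
      assert (Hpow : I1 (psi a e) ^ d <= (2 * a) ^ d) by (apply pow_incr; lra).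
      assert (HIle : I <= 4 * I * P * (2 * a) ^ d).
      { rewrite E1 at 1. rewrite E2.
        assert (0 <= I * P) by (apply Rmult_le_pos; lra).
        assert (I * P * I1 (psi a e) ^ d <= I * P * (2 * a) ^ d) by (apply Rmult_le_compat_l; auto).
        nra. }
      assert (H1 : 1 <= 4 * P * (2 * a) ^ d).
      { apply Rmult_le_reg_l with I; auto. nra. }
      unfold P in H1. rewrite Rpow_mult_distr. unfold a in *. nra. }
    set (q := Rpower 2 (- (2 / INR d))).
    assert (Hq : forall e, 0 < e -> q <= 2 * (r + e) * (2 * INR k - 1)).
    { intros e He0. apply rp_key; auto. apply Rmult_lt_0_compat. lra. lra. }
    assert (Hq2 : q <= 2 * r * (2 * INR k - 1)).
    { apply Rnot_lt_le. intros Hlt.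
      set (e := (q - 2 * r * (2 * INR k - 1)) / (4 * (2 * INR k - 1))).
      assert (He0 : 0 < e) by (unfold e; apply Rdiv_lt_0_compat; lra).
      specialize (Hq e He0).
      assert (2 * (r + e) * (2 * INR k - 1) = 2 * r * (2 * INR k - 1) + (q - 2 * r * (2 * INR k - 1)) / 2).
      { unfold e. field. lra. }
      lra. }
    assert (HdR : 0 < INR d) by (apply lt_0_INR; lia).
    assert (Ecomb : Rpower 2 (Ropp 1 + - (2 / INR d)) = q / 2).
    { rewrite Rpower_plus. rewrite (Rpower_Ropp 2 1), Rpower_1 by lra. unfold q. field. }
    assert (Hmono : Rpower 2 (- (1 + 4 / INR d)) <= Rpower 2 (Ropp 1 + - (2 / INR d))).
    { apply Rle_Rpower. lra. assert (2 / INR d <= 4 / INR d).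
      { unfold Rdiv. apply Rmult_le_compat_r. left; apply Rinv_0_lt_compat; auto. lra. }
      lra. }
    rewrite Ecomb in Hmono. lra.
Qed.
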